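(* Consider the one-species chemostat with constant inlet concentration $s_{in}>0$: $$\dot x=(\mu(s)-D(t)-b)x,\qquad \dot s=D(t)(s_{in}-s)-g(s)x,\qquad (s,x)\in(0,s_{in})\times(0,+\infty).$$ Let $(s^*,x^* )\in(0,s_{in})\times(0,+\infty)$ and $D^*>0$ satisfy $\mu(s^* )=D^*+b$ and $D^*(s_{in}-s^* )=g(s^* )x^*$. Suppose there is a locally Lipschitz $k:(0,s_{in})\times(0,+\infty)\to(0,+\infty)$ with $D^*=k(s^*,x^* )$ such that $(s^*,x^* )$ is globally asymptotically stable for the closed-loop system with $D=k(s,x)$ on $(0,s_{in})\times(0,+\infty)$. Suppose moreover that the system above with the dynamic feedback $D=k(s,z)$, $\dot z=(\mu(s)-D-b)z$, $z\in(0,+\infty)$, is forward complete. Then for every $r>0$, the equilibrium $(s,x,z)=(s^*,x^*,x^* )$ is globally asymptotically stable (on $(0,s_{in})\times(0,+\infty)\times(0,+\infty)$) for the closed-loop system consisting of the chemostat above, the hybrid observer $$\dot z(t)=(\mu(s(t))-D(t)-b)z(t),\ t\in[\tau_i,\tau_{i+1}),\qquad z(\tau_{i+1})=\exp\left(\int_{\tau_i}^{\tau_{i+1}}(\mu(s(w))-D(w)-b)dw\right)\frac{\int_{\tau_i}^{\tau_{i+1}}p(t)q(t)dt}{\int_{\tau_i}^{\tau_{i+1}}q^2(t)dt},\qquad \tau_{i+1}=\tau_i+r,$$ where $p(t)=s(t)-s(\tau_i)-\int_{\tau_i}^t D(w)(s_{in}-s(w))dw$ and $q(t)=-\int_{\tau_i}^t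 g(s(\rho))\exp\left(\int_{\tau_i}^{\rho}(\mu(s(w))-D(w)-b)dw\right)d\rho$, and the feedback $D(t)=k(s(t),z(t))$.
   Context: $\mu,g:[0,+\infty)\to[0,+\infty)$ are continuously differentiable bounded functions with $\mu(0)=g(0)=0$ and $\mu(s)>0$, $g(s)>0$ for $s>0$; $b\ge0$ is a constant. The observer is a hybrid system started at $\tau_0=0$ with arbitrary initial value $z(0)\in(0,+\infty)$; the times $\tau_i=ir$ are the reset instants. Global asymptotic stability means Lyapunov stability together with convergence to the equilibrium of every solution starting in the indicated state space. *)

(* Defs.v *)
From Stdlib Require Import Reals Lra.
From Coquelicot Require Import Coquelicot.
Open Scope R_scope.

Definition cont_right (f : R -> R) (t : R) : Prop :=
  filterlim f (at_right t) (locally (f t)).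
Definition cont_left (f : R -> R) (t : R) : Prop :=
  filterlim f (at_left t) (locally (f t)).

Definition C1_on_nonneg (f : R -> R) : Prop :=
  exists df : R -> R,
    (forall s, 0 < s -> is_derive f s (df s)) /\
    filterlim (fun h => (f h - f 0) / h) (at_right 0) (locally (df 0)) /\
    (forall s, 0 <= s -> forall eps, 0 < eps -> exists del, 0 < del /\
       forall y, 0 <= y -> Rabs (y - s) < del -> Rabs (df y - df s) < eps).

Definition admissible_rate (f : R -> R) : Prop :=
  C1_on_nonneg f /\
  (forall s, 0 <= s -> 0 <= f s) /\
  (exists M, forall s, 0 <= s -> f s <= M) /\
  f 0 = 0 /\
  (forall s, 0 < s -> 0 < f s).

Definition dist2 (a1 a2 b1 b2 : R) : R :=
  sqrt ((a1 - b1) ^ 2 + (a2 - b2) ^ 2).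
Definition dist3 (a1 a2 a3 b1 b2 b3 : R) : R :=
  sqrt ((a1 - b1) ^ 2 + (a2 - b2) ^ 2 + (a3 - b3) ^ 2).

Definition in_dom2 (sin s x : R) : Prop := 0 < s < sin /\ 0 < x.

Definition loc_lipschitz2 (sin : R) (k : R -> R -> R) : Prop :=
  forall s0 x0, in_dom2 sin s0 x0 ->
  exists rho L, 0 < rho /\ 0 <= L /\
    forall s1 x1 s2 x2,
      in_dom2 sin s1 x1 -> in_dom2 sin s2 x2 ->
      dist2 s1 x1 s0 x0 < rho -> dist2 s2 x2 s0 x0 < rho ->
      Rabs (k s1 x1 - k s2 x2) <= L * dist2 s1 x1 s2 x2.

Definition conv_to (f : R -> R) (l : R) : Prop :=
  filterlim f (Rbar_locally p_infty) (locally l).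

Definition static_sol (mu g : R -> R) (b sin : R) (k : R -> R -> R)
    (s x : R -> R) : Prop :=
  (forall t, 0 <= t -> in_dom2 sin (s t) (x t)) /\
  (forall t, 0 < t ->
     is_derive s t (k (s t) (x t) * (sin - s t) - g (s t) * x t) /\
     is_derive x t ((mu (s t) - k (s t) (x t) - b) * x t)) /\
  cont_right s 0 /\ cont_right x 0.

Definition GAS_static (mu g : R -> R) (b sin : R) (k : R -> R -> R)
    (ss xs : R) : Prop :=
  (forall eps, 0 < eps -> exists del, 0 < del /\
     forall s x, static_sol mu g b sin k s x ->
       dist2 (s 0) (x 0) ss xs < del ->
       forall t, 0 <= t -> dist2 (s t) (x t) ss xs < eps) /\
  (forall s0 x0, in_dom2 sin s0 x0 ->
     exists s x, static_sol mu g b sin k s x /\ s 0 = s0 /\ x 0 = x0) /\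
  (forall s x, static_sol mu g b sin k s x -> conv_to s ss /\ conv_to x xs).

Definition dyn_sol (mu g : R -> R) (b sin : R) (k : R -> R -> R)
    (s x z : R -> R) : Prop :=
  (forall t, 0 <= t -> in_dom2 sin (s t) (x t) /\ 0 < z t) /\
  (forall t, 0 < t ->
     is_derive s t (k (s t) (z t) * (sin - s t) - g (s t) * x t) /\
     is_derive x t ((mu (s t) - k (s t) (z t) - b) * x t) /\
     is_derive z t ((mu (s t) - k (s t) (z t) - b) * z t)) /\
  cont_right s 0 /\ cont_right x 0 /\ cont_right z 0.

Definition forward_complete_dyn (mu g : R -> R) (b sin : R)
    (k : R -> R -> R) : Prop :=
  forall s0 x0 z0, in_dom2 sin s0 x0 -> 0 < z0 ->
    exists s x z, dyn_sol mu g b sin k s x z /\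
      s 0 = s0 /\ x 0 = x0 /\ z 0 = z0.

(** Reset value of the hybrid observer on [a,c], computed from the
    (continuous versions on [a,c] of the) signals S, Z on that interval,
    with D(w) = k(S w, Z w). *)
Definition observer_reset (mu g : R -> R) (b sin : R) (k : R -> R -> R)
    (S Z : R -> R) (a c : R) : R :=
  let D := fun w => k (S w) (Z w) in
  let E := fun t => exp (RInt (fun w => mu (S w) - D w - b) a t) in
  let p := fun t => S t - S a - RInt (fun w => D w * (sin - S w)) a t in
  let q := fun t => - RInt (fun rho => g (S rho) * E rho) a t in
  E c * RInt (fun t => p t * q t) a c / RInt (fun t => (q t) ^ 2) a c.

(** Solutions on [0,+oo) of the hybrid closed loop: chemostat + hybrid
    observer with reset instants tau_i = i r + feedback D(t) = k(s(t), z(t)).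
    On each [tau_i, tau_{i+1}) the signals coincide with functions S, X, Z
    that are continuous on [tau_i, tau_{i+1}] and solve the flow equations
    on (tau_i, tau_{i+1}); s, x are continuous at tau_{i+1} and z is reset. *)
Definition hybrid_sol (mu g : R -> R) (b sin : R) (k : R -> R -> R) (r : R)
    (s x z : R -> R) : Prop :=
  (forall t, 0 <= t -> in_dom2 sin (s t) (x t) /\ 0 < z t) /\
  forall i : nat,
    let a := INR i * r in
    let c := INR (S i) * r in
    exists Sf Xf Zf : R -> R,
      (forall t, a <= t <= c -> in_dom2 sin (Sf t) (Xf t) /\ 0 < Zf t) /\
      (forall t, a < t < c ->
         is_derive Sf t (k (Sf t) (Zf t) * (sin - Sf t) - g (Sf t) * Xf t) /\
         is_derive Xf t ((mu (Sf t) - k (Sf t) (Zf t) - b) * Xf t) /\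
         is_derive Zf t ((mu (Sf t) - k (Sf t) (Zf t) - b) * Zf t)) /\
      cont_right Sf a /\ cont_right Xf a /\ cont_right Zf a /\
      cont_left Sf c /\ cont_left Xf c /\ cont_left Zf c /\
      (forall t, a <= t < c -> s t = Sf t /\ x t = Xf t /\ z t = Zf t) /\
      s c = Sf c /\ x c = Xf c /\
      z c = observer_reset mu g b sin k Sf Zf a c.

Definition GAS_hybrid (mu g : R -> R) (b sin : R) (k : R -> R -> R) (r : R)
    (ss xs : R) : Prop :=
  (forall eps, 0 < eps -> exists del, 0 < del /\
     forall s x z, hybrid_sol mu g b sin k r s x z ->
       dist3 (s 0) (x 0) (z 0) ss xs xs < del ->
       forall t, 0 <= t -> dist3 (s t) (x t) (z t) ss xs xs < eps) /\
  (forall s0 x0 z0, in_dom2 sin s0 x0 -> 0 < z0 ->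
     exists s x z, hybrid_sol mu g b sin k r s x z /\
       s 0 = s0 /\ x 0 = x0 /\ z 0 = z0) /\
  (forall s x z, hybrid_sol mu g b sin k r s x z ->
     conv_to s ss /\ conv_to x xs /\ conv_to z xs).

(* Main.v *)
Require Import Defs.
From Stdlib Require Import Reals.
From Coquelicot Require Import Coquelicot.
From Stdlib Require Import Lra Lia Classical IndefiniteDescription.
Open Scope R_scope.

Definition ecC (f : R -> R) t := forall e, 0 < e -> exists d, 0 < d /\
  forall y, Rabs (y - t) < d -> Rabs (f y - f t) < e.
Definition ecR (f : R -> R) t := forall e, 0 < e -> exists d, 0 < d /\
  forall y, t <= y < t + d -> Rabs (f y - f t) < e.
Definition ecL (f : R -> R) t := forall e, 0 < e -> exists d, 0 < d /\
  forall y, t - d < y <= t -> Rabs (f y - f t) < e.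

Lemma ecC_cont f t : ecC f t -> continuous f t.
Proof.
  intros H. apply filterlim_locally. intros eps.
  destruct (H eps (cond_pos eps)) as [d [Hd Hy]].
  exists (mkposreal d Hd). intros y Hb. apply Hy. exact Hb.
Qed.

Lemma cont_ecC f t : continuous f t -> ecC f t.
Proof.
  intros H e He. apply filterlim_locally with (eps := mkposreal e He) in H.
  destruct H as [d Hd]. exists d. split. apply cond_pos.
  intros y Hy. apply (Hd y). exact Hy.
Qed.

Lemma cr_ecR f t : cont_right f t -> ecR f t.
Proof.
  intros H e He. unfold cont_right in H.
  apply filterlim_locally with (eps := mkposreal e He) in H.
  destruct H as [d Hd]. exists d. split. apply cond_pos.
  intros y [Hy1 Hy2]. destruct (Rle_lt_or_eq_dec _ _ Hy1) as [Hl|Hq].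
  - apply (Hd y). change (Rabs (y - t) < d). rewrite Rabs_right; lra. exact Hl.
  - subst. unfold Rminus. rewrite Rplus_opp_r, Rabs_R0. exact He.
Qed.

Lemma cl_ecL f t : cont_left f t -> ecL f t.
Proof.
  intros H e He. unfold cont_left in H.
  apply filterlim_locally with (eps := mkposreal e He) in H.
  destruct H as [d Hd]. exists d. split. apply cond_pos.
  intros y [Hy1 Hy2]. destruct (Rle_lt_or_eq_dec _ _ Hy2) as [Hl|Hq].
  - apply (Hd y). change (Rabs (y - t) < d). rewrite Rabs_left; lra. exact Hl.
  - subst. unfold Rminus. rewrite Rplus_opp_r, Rabs_R0. exact He.
Qed.

Lemma ecR_cr f t : ecR f t -> cont_right f t.
Proof.
  intros H. unfold cont_right. apply filterlim_locally. intros eps.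
  destruct (H eps (cond_pos eps)) as [d [Hd Hy]].
  exists (mkposreal d Hd). intros y Hb Ht. apply Hy.
  change (Rabs (y - t) < d) in Hb. apply Rabs_def2 in Hb. lra.
Qed.

Lemma ecC_ecR f t : ecC f t -> ecR f t.
Proof. intros H e He. destruct (H e He) as [d [Hd Hy]]. exists d; split; auto.
  intros y Hy'. apply Hy. apply Rabs_def1; lra. Qed.
Lemma ecC_ecL f t : ecC f t -> ecL f t.
Proof. intros H e He. destruct (H e He) as [d [Hd Hy]]. exists d; split; auto.
  intros y Hy'. apply Hy. apply Rabs_def1; lra. Qed.
Lemma ecL_cl f t : ecL f t -> cont_left f t.
Proof.
  intros H. unfold cont_left. apply filterlim_locally. intros eps.
  destruct (H eps (cond_pos eps)) as [d [Hd Hy]].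
  exists (mkposreal d Hd). intros y Hb Ht. apply Hy.
  change (Rabs (y - t) < d) in Hb. apply Rabs_def2 in Hb. lra.
Qed.

Lemma der_ecC (f : R -> R) (t l : R) : is_derive f t l -> ecC f t.
Proof. intros H. apply cont_ecC. apply (@ex_derive_continuous R_AbsRing R_NormedModule). exists l; exact H. Qed.

Lemma ecC_cpt f t : ecC f t -> continuity_pt f t.
Proof. intros H. apply continuity_pt_filterlim. apply ecC_cont. exact H. Qed.

Lemma D_eq (f : R -> R) (x l1 l2 : R) : is_derive f x l1 -> l1 = l2 -> is_derive f x l2.
Proof. intros H ->; exact H. Qed.
Lemma D_mult (f g : R -> R) (x a b : R) : is_derive f x a -> is_derive g x b ->
  is_derive (fun t => f t * g t) x (a * g x + f x * b).
Proof. intros. exact (is_derive_mult f g x a b H H0 Rmult_comm). Qed.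
Lemma D_plus (f g : R -> R) (x a b : R) : is_derive f x a -> is_derive g x b ->
  is_derive (fun t => f t + g t) x (a + b).
Proof. intros. exact (is_derive_plus f g x a b H H0). Qed.
Lemma D_minus (f g : R -> R) (x a b : R) : is_derive f x a -> is_derive g x b ->
  is_derive (fun t => f t - g t) x (a - b).
Proof. intros. exact (is_derive_minus f g x a b H H0). Qed.
Lemma D_const (c x : R) : is_derive (fun _ => c) x 0.
Proof. exact (is_derive_const c x). Qed.
Lemma D_id (x : R) : is_derive (fun t => t) x 1.
Proof. exact (is_derive_id x). Qed.
Lemma D_comp (f g : R -> R) (x a b : R) : is_derive f (g x) a -> is_derive g x b ->
  is_derive (fun t => f (g t)) x (b * a).
Proof. intros. exact (is_derive_comp f g x a b H H0). Qed.
Lemma D_expc (f : R -> R) (x a : R) : is_derive f x a -> is_derive (fun t => exp (f t)) x (a * exp (f x)).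
Proof. intros. apply D_comp; auto. apply is_derive_exp. Qed.
Lemma D_shift (f : R -> R) (x c a : R) : is_derive f (x - c) a -> is_derive (fun t => f (t - c)) x a.
Proof. intros. apply D_eq with (1 * a). apply (D_comp f (fun t => t - c)). auto.
  apply D_eq with (1 - 0). apply D_minus. apply D_id. apply D_const. ring. ring. Qed.
Lemma D_shiftp (f : R -> R) (x c a : R) : is_derive f (x + c) a -> is_derive (fun t => f (t + c)) x a.
Proof. intros. apply D_eq with (1 * a). apply (D_comp f (fun t => t + c)). auto.
  apply D_eq with (1 + 0). apply D_plus. apply D_id. apply D_const. ring. ring. Qed.
Lemma D_sq (f : R -> R) (x a : R) : is_derive f x a -> is_derive (fun t => (f t)^2) x (2 * f x * a).
Proof. intros. apply D_eq with (a * f x + f x * a).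
  apply (is_derive_ext (fun t => f t * f t)). intros t; simpl; ring. apply D_mult; auto. ring. Qed.

Lemma sqrt_lt_of x y : 0 <= x -> 0 < y -> x < y^2 -> sqrt x < y.
Proof. intros. pose proof (sqrt_sqrt x H). pose proof (sqrt_pos x).
  destruct (Rlt_or_le (sqrt x) y); auto. nra. Qed.
Lemma sqrt_le_of x y : 0 <= x -> 0 <= y -> x <= y^2 -> sqrt x <= y.
Proof. intros. pose proof (sqrt_sqrt x H). pose proof (sqrt_pos x).
  destruct (Rle_or_lt (sqrt x) y); auto. nra. Qed.
Lemma lt_of_sqrt x y : 0 <= x -> sqrt x < y -> x < y^2.
Proof. intros. pose proof (sqrt_sqrt x H). pose proof (sqrt_pos x). nra. Qed.

Lemma dist2_le a1 a2 b1 b2 : dist2 a1 a2 b1 b2 <= Rabs (a1 - b1) + Rabs (a2 - b2).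
Proof. unfold dist2. apply sqrt_le_of.
  - apply Rplus_le_le_0_compat; apply pow2_ge_0. - pose proof (Rabs_pos (a1-b1)); pose proof (Rabs_pos (a2-b2)); lra.
  - pose proof (Rabs_pos (a1-b1)); pose proof (Rabs_pos (a2-b2)).
    rewrite <- (pow2_abs (a1-b1)), <- (pow2_abs (a2-b2)). nra. Qed.

Lemma ecC_of_cpt f t : continuity_pt f t -> ecC f t.
Proof. intros. apply cont_ecC. apply continuity_pt_filterlim. auto. Qed.

Lemma ecC_plus (f g : R -> R) t : ecC f t -> ecC g t -> ecC (fun y => f y + g y) t.
Proof. intros. apply ecC_of_cpt. apply (continuity_pt_plus f g); apply ecC_cpt; auto. Qed.
Lemma ecC_minus (f g : R -> R) t : ecC f t -> ecC g t -> ecC (fun y => f y - g y) t.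
Proof. intros. apply ecC_of_cpt. apply (continuity_pt_minus f g); apply ecC_cpt; auto. Qed.
Lemma ecC_mult (f g : R -> R) t : ecC f t -> ecC g t -> ecC (fun y => f y * g y) t.
Proof. intros. apply ecC_of_cpt. apply (continuity_pt_mult f g); apply ecC_cpt; auto. Qed.
Lemma ecC_const (c t : R) : ecC (fun _ => c) t.
Proof. apply ecC_of_cpt. apply continuity_pt_const. intros a b; auto. Qed.
Lemma ecC_id (t : R) : ecC (fun y => y) t.
Proof. apply ecC_of_cpt. apply derivable_continuous_pt. apply derivable_pt_id. Qed.
Lemma ecC_comp (f g : R -> R) t : ecC g t -> ecC f (g t) -> ecC (fun y => f (g y)) t.
Proof. intros. apply ecC_of_cpt. apply (continuity_pt_comp g f); apply ecC_cpt; auto. Qed.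
Lemma ecC_exp (t : R) : ecC exp t.
Proof. apply ecC_of_cpt. apply derivable_continuous_pt. apply derivable_pt_exp. Qed.
Lemma ecC_sq (f : R -> R) t : ecC f t -> ecC (fun y => (f y)^2) t.
Proof. intros. apply ecC_of_cpt. apply (continuity_pt_comp f (fun y => y^2)). apply ecC_cpt; auto.
  apply derivable_continuous_pt. apply derivable_pt_pow. Qed.

Lemma ecC_k sin (k : R -> R -> R) (S Z : R -> R) t :
  loc_lipschitz2 sin k -> (forall y, in_dom2 sin (S y) (Z y)) ->
  ecC S t -> ecC Z t -> ecC (fun y => k (S y) (Z y)) t.
Proof.
  intros Hk Hd HS HZ e He.
  destruct (Hk (S t) (Z t) (Hd t)) as [rho [L [Hr [HL HLip]]]].
  set (eta := Rmin (rho/2) (e / (2 * (L + 1)))).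
  assert (Heta : 0 < eta). { unfold eta. apply Rmin_pos. lra. apply Rdiv_lt_0_compat; lra. }
  destruct (HS eta Heta) as [d1 [Hd1 H1]]. destruct (HZ eta Heta) as [d2 [Hd2 H2]].
  exists (Rmin d1 d2). split. apply Rmin_pos; auto.
  intros y Hy. assert (Hy1 : Rabs (y - t) < d1) by (eapply Rlt_le_trans; [exact Hy| apply Rmin_l]).
  assert (Hy2 : Rabs (y - t) < d2) by (eapply Rlt_le_trans; [exact Hy| apply Rmin_r]).
  specialize (H1 y Hy1). specialize (H2 y Hy2).
  assert (E1 : eta <= rho/2) by apply Rmin_l.
  assert (E2 : eta <= e / (2 * (L+1))) by apply Rmin_r.
  assert (Hdist : dist2 (S y) (Z y) (S t) (Z t) < rho).
  { eapply Rle_lt_trans. apply dist2_le. lra. }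
  assert (Hdist0 : dist2 (S t) (Z t) (S t) (Z t) < rho).
  { eapply Rle_lt_trans. apply dist2_le. unfold Rminus; rewrite !Rplus_opp_r, Rabs_R0. lra. }
  eapply Rle_lt_trans. apply HLip; auto.
  eapply Rle_lt_trans. apply Rmult_le_compat_l. auto. apply dist2_le.
  assert (L * (Rabs (S y - S t) + Rabs (Z y - Z t)) <= L * (2 * eta)).
  { apply Rmult_le_compat_l; lra. }
  assert (L * (2 * eta) <= L * (2 * (e / (2 * (L + 1))))). { apply Rmult_le_compat_l; lra. }
  assert (L * (2 * (e / (2 * (L + 1)))) < e).
  { replace (L * (2 * (e / (2 * (L + 1))))) with (e * (L / (L+1))) by (field; lra).
    assert (L / (L+1) < 1). { apply (Rmult_lt_reg_r (L+1)). lra. unfold Rdiv. rewrite Rmult_assoc, Rinv_l; lra. }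
    nra. }
  lra.
Qed.
Lemma ecC_opp (f : R -> R) t : ecC f t -> ecC (fun y => - f y) t.
Proof. intros. apply ecC_of_cpt. apply (continuity_pt_opp f); apply ecC_cpt; auto. Qed.
Lemma D_opp (f : R -> R) (x a : R) : is_derive f x a -> is_derive (fun t => - f t) x (- a).
Proof. intros. exact (is_derive_opp f x a H). Qed.

Definition clamp a c t := Rmax a (Rmin c t).

Lemma clamp_id a c t : a <= t <= c -> clamp a c t = t.
Proof. intros. unfold clamp. rewrite Rmin_right by lra. rewrite Rmax_right by lra. auto. Qed.
Lemma clamp_lo a c t : a <= c -> t <= a -> clamp a c t = a.
Proof. intros. unfold clamp. rewrite Rmin_right by lra. rewrite Rmax_left by lra. auto. Qed.
Lemma clamp_hi a c t : a <= c -> c <= t -> clamp a c t = c.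
Proof. intros. unfold clamp. rewrite Rmin_left by lra. rewrite Rmax_right by lra. auto. Qed.
Lemma clamp_in a c t : a <= c -> a <= clamp a c t <= c.
Proof. intros. destruct (Rle_or_lt t a). rewrite clamp_lo; lra.
  destruct (Rle_or_lt c t). rewrite clamp_hi; lra. rewrite clamp_id; lra. Qed.

Lemma Rabs0 (x : R) : x - x = 0. Proof. ring. Qed.

Lemma clamp_ecC (f : R -> R) a c : a < c -> ecR f a -> ecL f c ->
  (forall t, a < t < c -> ecC f t) -> forall t, ecC (fun y => f (clamp a c y)) t.
Proof.
  intros Hac HR HL HI t e He.
  destruct (Rtotal_order t a) as [Hlt|[Heq|Hgt]].
  - exists (a - t). split. lra. intros y Hy. apply Rabs_def2 in Hy.
    rewrite (clamp_lo a c y), (clamp_lo a c t) by lra. rewrite Rabs0, Rabs_R0. auto.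
  - subst t. destruct (HR e He) as [d [Hd Hy]]. exists (Rmin d (c - a)). split.
    apply Rmin_pos; lra. intros y Hy'. apply Rabs_def2 in Hy'.
    assert (Rmin d (c-a) <= d) by apply Rmin_l. assert (Rmin d (c-a) <= c - a) by apply Rmin_r.
    rewrite (clamp_lo a c a) by lra.
    destruct (Rle_or_lt y a). rewrite (clamp_lo a c y) by lra. rewrite Rabs0, Rabs_R0. auto.
    rewrite clamp_id by lra. apply Hy. lra.
  - destruct (Rtotal_order t c) as [Hlt'|[Heq'|Hgt']].
    + destruct (HI t (conj Hgt Hlt') e He) as [d [Hd Hy]].
      exists (Rmin d (Rmin (t - a) (c - t))). split. repeat apply Rmin_pos; lra.
      intros y Hy'.
      assert (Rmin d (Rmin (t - a) (c - t)) <= d) by apply Rmin_l.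
      assert (Rmin d (Rmin (t - a) (c - t)) <= Rmin (t - a) (c - t)) by apply Rmin_r.
      assert (Rmin (t - a) (c - t) <= t - a) by apply Rmin_l.
      assert (Rmin (t - a) (c - t) <= c - t) by apply Rmin_r.
      pose proof Hy' as Hy''. apply Rabs_def2 in Hy''.
      rewrite (clamp_id a c y) by lra. rewrite (clamp_id a c t) by lra. apply Hy. lra.
    + subst t. destruct (HL e He) as [d [Hd Hy]]. exists (Rmin d (c - a)). split.
      apply Rmin_pos; lra. intros y Hy'. apply Rabs_def2 in Hy'.
      assert (Rmin d (c-a) <= d) by apply Rmin_l. assert (Rmin d (c-a) <= c - a) by apply Rmin_r.
      rewrite (clamp_hi a c c) by lra.
      destruct (Rle_or_lt c y). rewrite (clamp_hi a c y) by lra. rewrite Rabs0, Rabs_R0. auto.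
      rewrite clamp_id by lra. apply Hy. lra.
    + exists (t - c). split. lra. intros y Hy. apply Rabs_def2 in Hy.
      rewrite (clamp_hi a c y), (clamp_hi a c t) by lra. rewrite Rabs0, Rabs_R0. auto.
Qed.

Lemma clamp_loc (f : R -> R) a c t : a < t < c ->
  locally t (fun y => f y = f (clamp a c y)).
Proof.
  intros Ht. assert (Hp : 0 < Rmin (t - a) (c - t)) by (apply Rmin_pos; lra).
  exists (mkposreal _ Hp). intros y Hy. change (Rabs (y - t) < Rmin (t - a) (c - t)) in Hy.
  assert (Rmin (t - a) (c - t) <= t - a) by apply Rmin_l.
  assert (Rmin (t - a) (c - t) <= c - t) by apply Rmin_r.
  apply Rabs_def2 in Hy. rewrite clamp_id by lra. auto.
Qed.

Lemma loc_ball (t d : R) (P : R -> Prop) : 0 < d -> (forall y, Rabs (y - t) < d -> P y) -> locally t P.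
Proof. intros Hd H. exists (mkposreal d Hd). intros y Hy. apply H. exact Hy. Qed.

Lemma mvt_le (f df : R -> R) a b : a <= b -> (forall y, ecC f y) ->
  (forall y, a < y < b -> is_derive f y (df y)) ->
  (forall y, a <= y <= b -> df y <= 0) -> f b <= f a.
Proof.
  intros Hab Hc Hd Hn. destruct (Rle_lt_or_eq_dec _ _ Hab) as [Hlt|Heq].
  - destruct (MVT_gen f a b df) as [x [Hx Heqn]].
    + rewrite Rmin_left, Rmax_right by lra. auto.
    + intros; apply ecC_cpt; auto.
    + rewrite Rmin_left, Rmax_right in Hx by lra. specialize (Hn x Hx). nra.
  - subst. lra.
Qed.

Lemma mvt_eq (f df : R -> R) a b : a <= b -> (forall y, ecC f y) ->
  (forall y, a < y < b -> is_derive f y (df y)) ->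
  (forall y, a <= y <= b -> df y = 0) -> f b = f a.
Proof.
  intros Hab Hc Hd Hn. apply Rle_antisym.
  - apply (mvt_le f df); auto. intros y Hy; rewrite Hn; lra.
  - assert (0 - f b <= 0 - f a). { apply (mvt_le (fun y => 0 - f y) (fun y => 0 - df y)); auto.
      + intros y. apply (ecC_minus (fun _ => 0) f). apply ecC_const. apply (Hc y).
      + intros y Hy. apply D_eq with (0 - df y). apply (D_minus (fun _ => 0) f).
        apply D_const. auto. ring.
      + intros y Hy; rewrite Hn; lra. }
    lra.
Qed.

Lemma RI_ex (h : R -> R) a b : (forall y, ecC h y) -> ex_RInt h a b.
Proof. intros H. apply (@ex_RInt_continuous R_CompleteNormedModule). intros; apply ecC_cont; auto. Qed.

Lemma RI_der (h : R -> R) a t : (forall y, ecC h y) -> is_derive (fun u => RInt h a u) t (h t).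
Proof.
  intros H. apply (@is_derive_RInt R_CompleteNormedModule h (RInt h a) a t).
  - exists (mkposreal 1 Rlt_0_1). intros y _. apply RInt_correct. apply RI_ex; auto.
  - apply ecC_cont; auto.
Qed.

Lemma RI_ecC (h : R -> R) a t : (forall y, ecC h y) -> ecC (fun u => RInt h a u) t.
Proof. intros H. eapply der_ecC. apply RI_der; auto. Qed.

Lemma RI_pos (h : R -> R) a b : a < b -> (forall y, ecC h y) ->
  (forall y, a < y < b -> 0 < h y) -> 0 < RInt h a b.
Proof. intros. apply RInt_gt_0; auto. intros; apply ecC_cont; auto. Qed.

Lemma RI_zero (h : R -> R) a : RInt h a a = 0.
Proof. exact (@RInt_point R_CompleteNormedModule a h). Qed.

Definition piece (mu g : R -> R) (b sin : R) (k : R -> R -> R) (Sf Xf Zf : R -> R) (a c : R) : Prop :=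
  a < c /\
  (forall t, a <= t <= c -> in_dom2 sin (Sf t) (Xf t) /\ 0 < Zf t) /\
  (forall t, a < t < c ->
         is_derive Sf t (k (Sf t) (Zf t) * (sin - Sf t) - g (Sf t) * Xf t) /\
         is_derive Xf t ((mu (Sf t) - k (Sf t) (Zf t) - b) * Xf t) /\
         is_derive Zf t ((mu (Sf t) - k (Sf t) (Zf t) - b) * Zf t)) /\
  cont_right Sf a /\ cont_right Xf a /\ cont_right Zf a /\
  cont_left Sf c /\ cont_left Xf c /\ cont_left Zf c.

Lemma piece_clamp mu g b sin k Sf Xf Zf a c : piece mu g b sin k Sf Xf Zf a c ->
  let Sc := fun y => Sf (clamp a c y) in
  let Xc := fun y => Xf (clamp a c y) in
  let Zc := fun y => Zf (clamp a c y) in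
  (forall y, ecC Sc y /\ ecC Xc y /\ ecC Zc y) /\
  (forall y, in_dom2 sin (Sc y) (Xc y) /\ 0 < Zc y) /\
  (forall t, a < t < c ->
         is_derive Sc t (k (Sc t) (Zc t) * (sin - Sc t) - g (Sc t) * Xc t) /\
         is_derive Xc t ((mu (Sc t) - k (Sc t) (Zc t) - b) * Xc t) /\
         is_derive Zc t ((mu (Sc t) - k (Sc t) (Zc t) - b) * Zc t)) /\
  (forall t, a <= t <= c -> Sc t = Sf t /\ Xc t = Xf t /\ Zc t = Zf t).
Proof.
  intros [Hac [Hd [Hder [H1 [H2 [H3 [H4 [H5 H6]]]]]]]] Sc Xc Zc.
  assert (Hid : forall t, a <= t <= c -> Sc t = Sf t /\ Xc t = Xf t /\ Zc t = Zf t).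
  { intros t Ht. unfold Sc, Xc, Zc. rewrite clamp_id by lra. auto. }
  split; [|split; [|split]]; auto.
  - intros y. unfold Sc, Xc, Zc. split; [|split]; apply clamp_ecC; auto;
      try (apply cr_ecR; auto); try (apply cl_ecL; auto);
      intros t Ht; destruct (Hder t Ht) as [D1 [D2 D3]]; eapply der_ecC; eauto.
  - intros y. unfold Sc, Xc, Zc. apply Hd. apply clamp_in. lra.
  - intros t Ht. destruct (Hder t Ht) as [D1 [D2 D3]].
    unfold Sc, Xc, Zc. rewrite !clamp_id by lra.
    split; [|split]; eapply is_derive_ext_loc; try apply clamp_loc; eauto.
Qed.

Lemma reset_form mu g b sin k S Z a c :
  observer_reset mu g b sin k S Z a c =
  exp (RInt (fun w => mu (S w) - k (S w) (Z w) - b) a c) *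
  RInt (fun t => (S t - S a - RInt (fun w => k (S w) (Z w) * (sin - S w)) a t) *
     (- RInt (fun rho => g (S rho) * exp (RInt (fun w => mu (S w) - k (S w) (Z w) - b) a rho)) a t)) a c /
  RInt (fun t => (- RInt (fun rho => g (S rho) * exp (RInt (fun w => mu (S w) - k (S w) (Z w) - b) a rho)) a t) ^ 2) a c.
Proof. reflexivity. Qed.

Lemma RIext (f1 f2 : R -> R) a c : (forall w, a <= w <= c -> f1 w = f2 w) -> a <= c ->
  RInt f1 a c = RInt f2 a c.
Proof. intros H Hac. apply RInt_ext. intros x Hx. rewrite Rmin_left, Rmax_right in Hx by lra.
  apply H; lra. Qed.

Lemma reset_ext mu g b sin k S1 Z1 S2 Z2 a c : a <= c ->
  (forall w, a <= w <= c -> S1 w = S2 w /\ Z1 w = Z2 w) ->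
  observer_reset mu g b sin k S1 Z1 a c = observer_reset mu g b sin k S2 Z2 a c.
Proof.
  intros Hac H. rewrite !reset_form.
  assert (HE : forall t, a <= t <= c ->
    RInt (fun w => mu (S1 w) - k (S1 w) (Z1 w) - b) a t = RInt (fun w => mu (S2 w) - k (S2 w) (Z2 w) - b) a t).
  { intros t Ht. apply RIext; [|lra]. intros w Hw. destruct (H w) as [E1 E2]; [lra|]; cbv beta; rewrite E1; try rewrite E2; auto. }
  assert (HQ : forall t, a <= t <= c ->
     RInt (fun rho => g (S1 rho) * exp (RInt (fun w => mu (S1 w) - k (S1 w) (Z1 w) - b) a rho)) a t =
     RInt (fun rho => g (S2 rho) * exp (RInt (fun w => mu (S2 w) - k (S2 w) (Z2 w) - b) a rho)) a t).
  { intros t Ht. apply RIext; [|lra]. intros w Hw. rewrite HE by lra. destruct (H w) as [E1 E2]; [lra|]; cbv beta; rewrite E1; try rewrite E2; auto. }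
  rewrite HE by lra.
  assert (HN : RInt (fun t => (S1 t - S1 a - RInt (fun w => k (S1 w) (Z1 w) * (sin - S1 w)) a t) *
     (- RInt (fun rho => g (S1 rho) * exp (RInt (fun w => mu (S1 w) - k (S1 w) (Z1 w) - b) a rho)) a t)) a c
   = RInt (fun t => (S2 t - S2 a - RInt (fun w => k (S2 w) (Z2 w) * (sin - S2 w)) a t) *
     (- RInt (fun rho => g (S2 rho) * exp (RInt (fun w => mu (S2 w) - k (S2 w) (Z2 w) - b) a rho)) a t)) a c).
  { apply RIext; auto. intros t Ht. rewrite HQ by lra.
    assert (H0 : RInt (fun w => k (S1 w) (Z1 w) * (sin - S1 w)) a t = RInt (fun w => k (S2 w) (Z2 w) * (sin - S2 w)) a t).
    { apply RIext; [|lra]. intros w Hw. destruct (H w) as [E1 E2]; [lra|]; cbv beta; rewrite E1; try rewrite E2; auto. }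
    rewrite H0. destruct (H t) as [E1 _]; [lra|]. destruct (H a) as [E3 _]; [lra|]. rewrite E1, E3; auto. }
  assert (HD : RInt (fun t => (- RInt (fun rho => g (S1 rho) * exp (RInt (fun w => mu (S1 w) - k (S1 w) (Z1 w) - b) a rho)) a t) ^ 2) a c
    = RInt (fun t => (- RInt (fun rho => g (S2 rho) * exp (RInt (fun w => mu (S2 w) - k (S2 w) (Z2 w) - b) a rho)) a t) ^ 2) a c).
  { apply RIext; auto. intros t Ht. rewrite HQ by lra. auto. }
  rewrite HN, HD. reflexivity.
Qed.

Section Core.
Variables (mu g : R -> R) (b sin : R) (k : R -> R -> R).
Hypothesis Hmuc : forall s, 0 < s -> ecC mu s.
Hypothesis Hgc : forall s, 0 < s -> ecC g s.
Hypothesis Hgpos : forall s, 0 < s -> 0 < g s.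
Hypothesis Hklip : loc_lipschitz2 sin k.
Variables (Sc Xc Zc : R -> R) (a c : R).
Hypothesis Hac : a < c.
Hypothesis Hcont : forall y, ecC Sc y /\ ecC Xc y /\ ecC Zc y.
Hypothesis Hdom : forall y, in_dom2 sin (Sc y) (Xc y) /\ 0 < Zc y.
Hypothesis Hder : forall t, a < t < c ->
         is_derive Sc t (k (Sc t) (Zc t) * (sin - Sc t) - g (Sc t) * Xc t) /\
         is_derive Xc t ((mu (Sc t) - k (Sc t) (Zc t) - b) * Xc t) /\
         is_derive Zc t ((mu (Sc t) - k (Sc t) (Zc t) - b) * Zc t).

Let c1 := fun w => mu (Sc w) - k (Sc w) (Zc w) - b.
Let E := fun t => exp (RInt c1 a t).

Lemma c1_ecC y : ecC c1 y.
Proof.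
  unfold c1. destruct (Hdom y) as [[[Hs1 Hs2] Hx] Hz].
  apply ecC_minus; [apply ecC_minus|apply ecC_const].
  - apply ecC_comp. apply Hcont. apply Hmuc. lra.
  - apply ecC_k with sin; auto. intros w. destruct (Hdom w) as [[Hs Hx'] Hz']. split; auto. apply Hcont. apply Hcont.
Qed.

Lemma E_ecC y : ecC E y.
Proof. unfold E. apply (ecC_comp exp). apply RI_ecC. apply c1_ecC. apply ecC_exp. Qed.

Lemma E_der y : is_derive E y (c1 y * E y).
Proof. unfold E. apply D_expc. apply RI_der. apply c1_ecC. Qed.

Lemma E_a : E a = 1.
Proof. unfold E. rewrite RI_zero. apply exp_0. Qed.

Lemma lin_sol (W : R -> R) : (forall y, ecC W y) ->
  (forall t, a < t < c -> is_derive W t (c1 t * W t)) ->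
  forall t, a <= t <= c -> W t = W a * E t.
Proof.
  intros HW HWd t Ht.
  set (h := fun y => W y * exp (0 - RInt c1 a y)).
  assert (h t = h a).
  { apply (mvt_eq h (fun _ => 0)); try lra.
    - intros y. unfold h. apply ecC_mult. auto. apply (ecC_comp exp (fun y => 0 - RInt c1 a y)).
      apply (ecC_minus (fun _ => 0) (fun y => RInt c1 a y)). apply ecC_const. apply RI_ecC. apply c1_ecC.
      apply ecC_exp.
    - intros y Hy. unfold h. eapply D_eq. apply D_mult. apply HWd. lra.
      apply D_expc. apply (D_minus (fun _ => 0) (fun y => RInt c1 a y)). apply D_const. apply RI_der. apply c1_ecC.
      cbv beta; ring.
    - auto. }
  unfold h in H. rewrite RI_zero in H. replace (0 - 0) with 0 in H by ring. rewrite exp_0, Rmult_1_r in H. rewrite <- H.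
  unfold E. rewrite Rmult_assoc, <- exp_plus. replace (0 - RInt c1 a t + RInt c1 a t) with 0 by ring.
  rewrite exp_0. ring.
Qed.

Lemma X_sol t : a <= t <= c -> Xc t = Xc a * E t.
Proof. apply lin_sol. intros; apply Hcont. intros; apply Hder; auto. Qed.
Lemma Z_sol t : a <= t <= c -> Zc t = Zc a * E t.
Proof. apply lin_sol. intros; apply Hcont. intros; apply Hder; auto. Qed.

Lemma reset_core : observer_reset mu g b sin k Sc Zc a c = Xc c.
Proof.
  rewrite reset_form. fold c1. fold (E c).
  set (P := fun t => Sc t - Sc a - RInt (fun w => k (Sc w) (Zc w) * (sin - Sc w)) a t).
  set (Q := fun t => - RInt (fun rho => g (Sc rho) * E rho) a t).
  change (E c * RInt (fun t => P t * Q t) a c / RInt (fun t => Q t ^ 2) a c = Xc c).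
  assert (Hg1 : forall y, ecC (fun rho => g (Sc rho) * E rho) y).
  { intros y. apply ecC_mult. apply ecC_comp. apply Hcont. apply Hgc. apply Hdom. apply E_ecC. }
  assert (Hkc : forall y, ecC (fun w => k (Sc w) (Zc w) * (sin - Sc w)) y).
  { intros y. apply ecC_mult. apply ecC_k with sin; auto. intros w. destruct (Hdom w) as [[Hs Hx'] Hz']. split; auto.
    apply Hcont. apply Hcont. apply ecC_minus. apply ecC_const. apply Hcont. }
  assert (HQc : forall y, ecC Q y).
  { intros y. unfold Q. apply (ecC_opp (fun t => RInt (fun rho => g (Sc rho) * E rho) a t)).
    apply RI_ecC. auto. }
  assert (HPQ : forall t, a <= t <= c -> P t = Xc a * Q t).
  { intros t Ht.
    set (hh := fun y => P y - Xc a * Q y).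
    assert (hh t = hh a).
    { apply (mvt_eq hh (fun _ => 0)); try lra.
      - intros y. unfold hh, P. apply ecC_minus. apply ecC_minus. apply ecC_minus. apply Hcont. apply ecC_const.
        apply RI_ecC; auto. apply ecC_mult. apply ecC_const. auto.
      - intros y Hy. unfold hh, P, Q. destruct (Hder y) as [D1 _]. lra.
        eapply D_eq. apply D_minus. apply D_minus. apply D_minus. exact D1. apply D_const.
        apply RI_der; auto. apply (D_mult (fun _ => Xc a)). apply D_const.
        apply (D_opp (fun t => RInt (fun rho => g (Sc rho) * E rho) a t)).
        apply RI_der; auto.
        cbv beta. rewrite X_sol by lra. ring.
      - auto. }
    unfold hh, P, Q in H. rewrite !RI_zero in H. unfold P, Q. lra. }
  assert (HQneg : forall t, a < t <= c -> Q t < 0).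
  { intros t Ht. unfold Q. assert (0 < RInt (fun rho => g (Sc rho) * E rho) a t).
    { apply RI_pos; try lra; auto. intros y Hy. apply Rmult_lt_0_compat. apply Hgpos. apply Hdom.
      unfold E. apply exp_pos. }
    lra. }
  assert (HQ2 : 0 < RInt (fun t => Q t ^ 2) a c).
  { apply RI_pos; auto. intros y. apply ecC_sq. auto. intros y Hy. specialize (HQneg y (conj (proj1 Hy) (Rlt_le _ _ (proj2 Hy)))). nra. }
  rewrite (RIext (fun t => P t * Q t) (fun t => Xc a * (Q t ^ 2))) by (try lra; intros; rewrite HPQ; auto; ring).
  assert (HS : RInt (fun t => Xc a * Q t ^ 2) a c = Xc a * RInt (fun t => Q t ^ 2) a c).
  { apply (RInt_scal (V := R_CompleteNormedModule) (fun t => Q t ^ 2) a c (Xc a)). apply RI_ex. intros y; apply ecC_sq; auto. }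
  rewrite HS. rewrite (X_sol c) by lra. field. lra.
Qed.

End Core.

Lemma piece_reset mu g b sin k Sf Xf Zf a c :
  (forall s, 0 < s -> ecC mu s) -> (forall s, 0 < s -> ecC g s) ->
  (forall s, 0 < s -> 0 < g s) -> loc_lipschitz2 sin k ->
  piece mu g b sin k Sf Xf Zf a c ->
  observer_reset mu g b sin k Sf Zf a c = Xf c /\
  (forall t, a <= t <= c -> Xf t * Zf a = Zf t * Xf a).
Proof.
  intros Hmuc Hgc Hgpos Hklip HP. pose proof HP as HP'.
  destruct HP' as [Hac _].
  apply piece_clamp in HP. cbv zeta in HP. destruct HP as [Hc [Hd [Hder Hid]]].
  split.
  - rewrite (reset_ext mu g b sin k Sf Zf (fun y => Sf (clamp a c y)) (fun y => Zf (clamp a c y)) a c).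
    + rewrite (reset_core mu g b sin k Hmuc Hgc Hgpos Hklip (fun y => Sf (clamp a c y))
        (fun y => Xf (clamp a c y)) (fun y => Zf (clamp a c y)) a c Hac Hc Hd Hder).
      destruct (Hid c) as [_ [E _]]. lra. exact E.
    + lra.
    + intros w Hw. destruct (Hid w Hw) as [E1 [_ E3]]. auto.
  - intros t Ht.
    pose proof (X_sol mu g b sin k Hmuc Hklip (fun y => Sf (clamp a c y))
        (fun y => Xf (clamp a c y)) (fun y => Zf (clamp a c y)) a c Hc Hd Hder t Ht) as HX.
    pose proof (Z_sol mu g b sin k Hmuc Hklip (fun y => Sf (clamp a c y))
        (fun y => Xf (clamp a c y)) (fun y => Zf (clamp a c y)) a c Hc Hd Hder t Ht) as HZ.
    cbv beta in HX, HZ.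
    destruct (Hid t Ht) as [_ [E2 E3]]. destruct (Hid a) as [_ [E4 E5]]. lra.
    rewrite E2, E4 in HX. rewrite E3, E5 in HZ. rewrite HX, HZ. ring.
Qed.

Lemma glue (f g1 g2 d1 d2 : R -> R) t0 del l : 0 < del ->
  (forall y, t0 - del < y <= t0 -> f y = g1 y) ->
  (forall y, t0 <= y < t0 + del -> f y = g2 y) ->
  (forall y, ecC g1 y) -> (forall y, ecC g2 y) ->
  (forall y, t0 - del < y < t0 -> is_derive g1 y (d1 y)) ->
  (forall y, t0 < y < t0 + del -> is_derive g2 y (d2 y)) ->
  ecC d1 t0 -> ecC d2 t0 -> d1 t0 = l -> d2 t0 = l -> is_derive f t0 l.
Proof.
  intros Hdel Hf1 Hf2 Hg1 Hg2 Hd1 Hd2 Hc1 Hc2 E1 E2.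
  apply is_derive_Reals. intros eps Heps.
  destruct (Hc1 eps Heps) as [e1 [He1 H1]]. destruct (Hc2 eps Heps) as [e2 [He2 H2]].
  assert (Hm : 0 < Rmin del (Rmin e1 e2)) by (repeat apply Rmin_pos; lra).
  exists (mkposreal _ Hm). intros h Hh0 Hh. simpl in Hh.
  assert (Rmin del (Rmin e1 e2) <= del) by apply Rmin_l.
  assert (Rmin del (Rmin e1 e2) <= Rmin e1 e2) by apply Rmin_r.
  assert (Rmin e1 e2 <= e1) by apply Rmin_l. assert (Rmin e1 e2 <= e2) by apply Rmin_r.
  apply Rabs_def2 in Hh.
  destruct (Rlt_or_le h 0) as [Hn|Hp].
  - destruct (MVT_gen g1 (t0 + h) t0 d1) as [xi [Hxi Heq]].
    + rewrite Rmin_left, Rmax_right by lra. intros y Hy. apply Hd1. lra.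
    + intros; apply ecC_cpt; auto.
    + rewrite Rmin_left, Rmax_right in Hxi by lra.
      rewrite (Hf1 (t0 + h)) by lra. rewrite (Hf1 t0) by lra.
      replace ((g1 (t0 + h) - g1 t0) / h) with (d1 xi) by (field_simplify_eq; [lra|auto]).
      rewrite <- E1. apply H1. apply Rabs_def1; lra.
  - assert (Hpos : 0 < h) by lra.
    destruct (MVT_gen g2 t0 (t0 + h) d2) as [xi [Hxi Heq]].
    + rewrite Rmin_left, Rmax_right by lra. intros y Hy. apply Hd2. lra.
    + intros; apply ecC_cpt; auto.
    + rewrite Rmin_left, Rmax_right in Hxi by lra.
      rewrite (Hf2 (t0 + h)) by lra. rewrite (Hf2 t0) by lra.
      replace ((g2 (t0 + h) - g2 t0) / h) with (d2 xi) by (field_simplify_eq; [lra|auto]).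
      rewrite <- E2. apply H2. apply Rabs_def1; lra.
Qed.

Lemma Fs_ecC (g : R -> R) sin k (S X Z : R -> R) y :
  (forall s, 0 < s -> ecC g s) -> loc_lipschitz2 sin k ->
  (forall w, in_dom2 sin (S w) (X w) /\ 0 < Z w) ->
  (forall w, ecC S w /\ ecC X w /\ ecC Z w) ->
  ecC (fun w => k (S w) (Z w) * (sin - S w) - g (S w) * X w) y.
Proof.
  intros Hgc Hk Hd Hc. apply ecC_minus; apply ecC_mult.
  - apply ecC_k with sin; auto. intros w; destruct (Hd w) as [[H1 _] H2]; split; auto. apply Hc. apply Hc.
  - apply ecC_minus. apply ecC_const. apply Hc.
  - apply ecC_comp. apply Hc. apply Hgc. apply Hd.
  - apply Hc.
Qed.

Lemma Fx_ecC (mu : R -> R) b sin k (S X Z : R -> R) y :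
  (forall s, 0 < s -> ecC mu s) -> loc_lipschitz2 sin k ->
  (forall w, in_dom2 sin (S w) (X w) /\ 0 < Z w) ->
  (forall w, ecC S w /\ ecC X w /\ ecC Z w) ->
  ecC (fun w => (mu (S w) - k (S w) (Z w) - b) * X w) y.
Proof.
  intros Hgc Hk Hd Hc. apply ecC_mult. apply ecC_minus. apply ecC_minus.
  - apply ecC_comp. apply Hc. apply Hgc. apply Hd.
  - apply ecC_k with sin; auto. intros w; destruct (Hd w) as [[H1 _] H2]; split; auto. apply Hc. apply Hc.
  - apply ecC_const.
  - apply Hc.
Qed.

Lemma idx_ex r t : 0 < r -> 0 <= t -> exists i : nat, INR i * r <= t < INR (S i) * r.
Proof.
  intros Hr Ht. destruct (INR_archimed r t Hr) as [n Hn].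
  assert (forall m, t < INR m * r -> exists i : nat, INR i * r <= t < INR (S i) * r).
  { induction m as [|m IH]; intros H.
    - simpl in H. lra.
    - destruct (Rlt_or_le t (INR m * r)). apply IH; auto. exists m. split; auto. }
  apply (H n). lra.
Qed.

Lemma idx_uniq r t i j : 0 < r -> INR i * r <= t < INR (S i) * r -> INR j * r <= t < INR (S j) * r -> i = j.
Proof.
  intros Hr Hi Hj. rewrite !S_INR in *.
  destruct (Nat.lt_trichotomy i j) as [H|[H|H]]; auto.
  - apply lt_INR in H. assert (INR i + 1 <= INR j).
    { rewrite <- S_INR. apply le_INR. apply INR_lt in H. lia. } nra.
  - apply lt_INR in H. assert (INR j + 1 <= INR i).
    { rewrite <- S_INR. apply le_INR. apply INR_lt in H. lia. } nra.
Qed.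

Definition hpiece mu g b sin k r (s x z : R -> R) (i : nat) (Sf Xf Zf : R -> R) : Prop :=
  piece mu g b sin k Sf Xf Zf (INR i * r) (INR (S i) * r) /\
  (forall t, INR i * r <= t < INR (S i) * r -> s t = Sf t /\ x t = Xf t /\ z t = Zf t) /\
  s (INR (S i) * r) = Sf (INR (S i) * r) /\ x (INR (S i) * r) = Xf (INR (S i) * r) /\
  z (INR (S i) * r) = Xf (INR (S i) * r) /\
  (forall t, INR i * r <= t <= INR (S i) * r -> Xf t * Zf (INR i * r) = Zf t * Xf (INR i * r)).

Section Hyb.
Variables (mu g : R -> R) (b sin : R) (k : R -> R -> R) (r : R).
Hypothesis Hmuc : forall s, 0 < s -> ecC mu s.
Hypothesis Hgc : forall s, 0 < s -> ecC g s.
Hypothesis Hgpos : forall s, 0 < s -> 0 < g s.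
Hypothesis Hklip : loc_lipschitz2 sin k.
Hypothesis Hr : 0 < r.
Variables (s x z : R -> R).
Hypothesis Hs : hybrid_sol mu g b sin k r s x z.

Lemma ac_lt i : INR i * r < INR (S i) * r.
Proof. rewrite S_INR. lra. Qed.

Lemma hyb_piece i : exists Sf Xf Zf, hpiece mu g b sin k r s x z i Sf Xf Zf.
Proof.
  destruct Hs as [_ H]. destruct (H i) as [Sf [Xf [Zf [Hd [Hder [H1 [H2 [H3 [H4 [H5 [H6 [Heq [Es [Ex Ez]]]]]]]]]]]]]].
  assert (HP : piece mu g b sin k Sf Xf Zf (INR i * r) (INR (S i) * r)).
  { exact (conj (ac_lt i) (conj Hd (conj Hder (conj H1 (conj H2 (conj H3 (conj H4 (conj H5 H6)))))))). }
  destruct (piece_reset mu g b sin k Sf Xf Zf _ _ Hmuc Hgc Hgpos Hklip HP) as [HR Hrat].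
  exists Sf, Xf, Zf. exact (conj HP (conj Heq (conj Es (conj Ex (conj (eq_trans Ez HR) Hrat))))).
Qed.

Lemma hyb_piece1 j : exists Sf Xf Zf, hpiece mu g b sin k r s x z (S j) Sf Xf Zf /\
  forall t, INR (S j) * r <= t <= INR (S (S j)) * r -> Zf t = Xf t.
Proof.
  destruct (hyb_piece (S j)) as [Sf [Xf [Zf HP]]].
  destruct (hyb_piece j) as [Sf' [Xf' [Zf' HP']]].
  exists Sf, Xf, Zf. split; auto.
  destruct HP as [Hpc [Heq [_ [_ [_ Hrat]]]]].
  destruct HP' as [_ [_ [_ [Ex' [Ez' _]]]]].
  assert (Ha := ac_lt (S j)).
  destruct (Heq (INR (S j) * r)) as [_ [E2 E3]]. lra.
  assert (HZa : Zf (INR (S j) * r) = Xf (INR (S j) * r)) by congruence.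
  destruct Hpc as [_ [Hd _]].
  assert (Hxa : 0 < Xf (INR (S j) * r)). { apply Hd. lra. }
  intros t Ht. specialize (Hrat t Ht). rewrite HZa in Hrat.
  apply (Rmult_eq_reg_r (Xf (INR (S j) * r))). lra. lra.
Qed.

Lemma hyb_zx t : r <= t -> z t = x t.
Proof.
  intros Ht. destruct (idx_ex r t Hr) as [i Hi]. lra.
  destruct i as [|j].
  - simpl in Hi. lra.
  - destruct (hyb_piece1 j) as [Sf [Xf [Zf [[_ [Heq _]] HZ]]]].
    destruct (Heq t Hi) as [_ [E2 E3]]. rewrite E2, E3. apply HZ. lra.
Qed.

End Hyb.

Section Stat.
Variables (mu g : R -> R) (b sin : R) (k : R -> R -> R) (r : R).
Hypothesis Hmuc : forall s, 0 < s -> ecC mu s.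
Hypothesis Hgc : forall s, 0 < s -> ecC g s.
Hypothesis Hgpos : forall s, 0 < s -> 0 < g s.
Hypothesis Hklip : loc_lipschitz2 sin k.
Hypothesis Hr : 0 < r.
Variables (s x z : R -> R).
Hypothesis Hs : hybrid_sol mu g b sin k r s x z.

Lemma INR_gt1 j : r < INR (S j) * r -> (1 <= j)%nat.
Proof. intros H. destruct j. simpl in H. lra. lia. Qed.

Lemma hyb_der T : r < T ->
  is_derive s T (k (s T) (x T) * (sin - s T) - g (s T) * x T) /\
  is_derive x T ((mu (s T) - k (s T) (x T) - b) * x T).
Proof.
  intros HT. destruct (idx_ex r T Hr) as [i Hi]. lra.
  destruct i as [|j]. { simpl in Hi. lra. }
  destruct (Rle_lt_or_eq_dec _ _ (proj1 Hi)) as [Hlt|Heq].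
  - destruct (hyb_piece1 mu g b sin k r Hmuc Hgc Hgpos Hklip Hr s x z Hs j) as [Sf [Xf [Zf [[HP [Heq _]] HZ]]]].
    destruct HP as [_ [_ [Hder _]]].
    destruct (Hder T) as [D1 [D2 _]]. lra.
    destruct (Heq T) as [E1 [E2 _]]. lra.
    rewrite (HZ T) in D1, D2 by lra. rewrite E1, E2.
    assert (Hloc : locally T (fun y => Sf y = s y /\ Xf y = x y)).
    { apply (loc_ball T (Rmin (T - INR (S j) * r) (INR (S (S j)) * r - T))). apply Rmin_pos; lra.
      intros y Hy. apply Rabs_def2 in Hy.
      assert (Rmin (T - INR (S j) * r) (INR (S (S j)) * r - T) <= T - INR (S j) * r) by apply Rmin_l.
      assert (Rmin (T - INR (S j) * r) (INR (S (S j)) * r - T) <= INR (S (S j)) * r - T) by apply Rmin_r.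
      destruct (Heq y) as [F1 [F2 _]]. lra. auto. }
    split.
    + eapply is_derive_ext_loc. 2: exact D1. eapply filter_imp. 2: exact Hloc. intros y [H1 _]; auto.
    + eapply is_derive_ext_loc. 2: exact D2. eapply filter_imp. 2: exact Hloc. intros y [_ H2]; auto.
  - (* T is a reset instant *)
    pose proof (INR_gt1 j) as Hj. destruct j as [|m]. { exfalso. assert (1 <= 0)%nat by (apply Hj; lra). lia. }
    destruct (hyb_piece1 mu g b sin k r Hmuc Hgc Hgpos Hklip Hr s x z Hs m) as [Sl [Xl [Zl [[HPl [Heql [Esl [Exl _]]]] HZl]]]].
    destruct (hyb_piece1 mu g b sin k r Hmuc Hgc Hgpos Hklip Hr s x z Hs (S m)) as [Sr [Xr [Zr [[HPr [Heqr _]] HZr]]]].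
    subst T.
    set (T := INR (S (S m)) * r).
    assert (HaT : INR (S m) * r = T - r). { unfold T. rewrite (S_INR (S m)). ring. }
    assert (HcT : INR (S (S (S m))) * r = T + r). { unfold T. rewrite (S_INR (S (S m))). ring. }
    rewrite HaT in Heql, HZl. rewrite HcT in Heqr, HZr. fold T in Heql, HZl, Esl, Exl, Heqr, HZr.
    pose proof HPl as HPl'. pose proof HPr as HPr'.
    apply piece_clamp in HPl'. apply piece_clamp in HPr'. cbv zeta in HPl', HPr'.
    destruct HPl' as [Cl [Dl [Derl Idl]]]. destruct HPr' as [Cr [Dr [Derr Idr]]].
    rewrite HaT in Derl, Idl. rewrite HcT in Derr, Idr. fold T in Derl, Idl, Derr, Idr.
    rewrite HaT in Cl, Dl. rewrite HcT in Cr, Dr. fold T in Cl, Dl, Cr, Dr.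
    destruct (Idl T) as [Il1 [Il2 Il3]]. lra. destruct (Idr T) as [Ir1 [Ir2 Ir3]]. lra.
    destruct (Heqr T) as [Er1 [Er2 _]]. lra.
    assert (HZlT : Zl T = Xl T) by (apply HZl; lra).
    assert (HZrT : Zr T = Xr T) by (apply HZr; lra).
    split.
    + apply (glue s (fun y => Sl (clamp (T - r) T y)) (fun y => Sr (clamp T (T + r) y))
        (fun w => k (Sl (clamp (T - r) T w)) (Zl (clamp (T - r) T w)) * (sin - Sl (clamp (T - r) T w)) -
                  g (Sl (clamp (T - r) T w)) * Xl (clamp (T - r) T w))
        (fun w => k (Sr (clamp T (T + r) w)) (Zr (clamp T (T + r) w)) * (sin - Sr (clamp T (T + r) w)) -
                  g (Sr (clamp T (T + r) w)) * Xr (clamp T (T + r) w)) T r).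
      * lra.
      * intros y Hy. destruct (Rle_lt_or_eq_dec _ _ (proj2 Hy)) as [Hy'|Hy'].
        -- destruct (Heql y) as [F1 _]. lra. rewrite F1. destruct (Idl y) as [G1 _]. lra. auto.
        -- subst y. rewrite Esl. auto.
      * intros y Hy. destruct (Heqr y) as [F1 _]. lra. rewrite F1. destruct (Idr y) as [G1 _]. lra. auto.
      * intros y; apply Cl. * intros y; apply Cr.
      * intros y Hy; apply Derl; lra. * intros y Hy; apply Derr; lra.
      * apply (Fs_ecC g sin k (fun y => Sl (clamp (T - r) T y)) (fun y => Xl (clamp (T - r) T y)) (fun y => Zl (clamp (T - r) T y))); auto.
      * apply (Fs_ecC g sin k (fun y => Sr (clamp T (T + r) y)) (fun y => Xr (clamp T (T + r) y)) (fun y => Zr (clamp T (T + r) y))); auto.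
      * cbv beta. rewrite Il1, Il2, Il3, HZlT, <- Esl, <- Exl. auto.
      * cbv beta. rewrite Ir1, Ir2, Ir3, HZrT, <- Er1, <- Er2. auto.
    + apply (glue x (fun y => Xl (clamp (T - r) T y)) (fun y => Xr (clamp T (T + r) y))
        (fun w => (mu (Sl (clamp (T - r) T w)) - k (Sl (clamp (T - r) T w)) (Zl (clamp (T - r) T w)) - b) * Xl (clamp (T - r) T w))
        (fun w => (mu (Sr (clamp T (T + r) w)) - k (Sr (clamp T (T + r) w)) (Zr (clamp T (T + r) w)) - b) * Xr (clamp T (T + r) w))
        T r).
      * lra.
      * intros y Hy. destruct (Rle_lt_or_eq_dec _ _ (proj2 Hy)) as [Hy'|Hy'].
        -- destruct (Heql y) as [_ [F1 _]]. lra. rewrite F1. destruct (Idl y) as [_ [G1 _]]. lra. auto.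
        -- subst y. rewrite Exl. auto.
      * intros y Hy. destruct (Heqr y) as [_ [F1 _]]. lra. rewrite F1. destruct (Idr y) as [_ [G1 _]]. lra. auto.
      * intros y; apply Cl. * intros y; apply Cr.
      * intros y Hy; apply Derl; lra. * intros y Hy; apply Derr; lra.
      * apply (Fx_ecC mu b sin k (fun y => Sl (clamp (T - r) T y)) (fun y => Xl (clamp (T - r) T y)) (fun y => Zl (clamp (T - r) T y))); auto.
      * apply (Fx_ecC mu b sin k (fun y => Sr (clamp T (T + r) y)) (fun y => Xr (clamp T (T + r) y)) (fun y => Zr (clamp T (T + r) y))); auto.
      * cbv beta. rewrite Il1, Il2, Il3, HZlT, <- Esl, <- Exl. auto.
      * cbv beta. rewrite Ir1, Ir2, Ir3, HZrT, <- Er1, <- Er2. auto.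
Qed.

Lemma hyb_static : static_sol mu g b sin k (fun t => s (t + r)) (fun t => x (t + r)).
Proof.
  split; [|split; [|split]].
  - intros t Ht. apply Hs. lra.
  - intros t Ht. destruct (hyb_der (t + r)) as [D1 D2]. lra.
    split; apply D_shiftp; auto.
  - destruct (hyb_piece1 mu g b sin k r Hmuc Hgc Hgpos Hklip Hr s x z Hs 0) as [Sf [Xf [Zf [[HP [Heq _]] _]]]].
    destruct HP as [_ [_ [_ [H1 _]]]]. apply ecR_cr. apply cr_ecR in H1.
    replace (INR 1 * r) with r in * by (simpl; ring).
    replace (INR 2 * r) with (r + r) in * by (simpl; ring).
    intros e He. destruct (H1 e He) as [d [Hd Hy]]. exists (Rmin d r). split. apply Rmin_pos; lra.
    intros y Hy'. assert (Rmin d r <= d) by apply Rmin_l. assert (Rmin d r <= r) by apply Rmin_r.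
    destruct (Heq (y + r)) as [F1 _]. lra. destruct (Heq (0 + r)) as [F2 _]. lra.
    rewrite F1, F2. replace (0 + r) with r by ring. apply Hy. lra.
  - destruct (hyb_piece1 mu g b sin k r Hmuc Hgc Hgpos Hklip Hr s x z Hs 0) as [Sf [Xf [Zf [[HP [Heq _]] _]]]].
    destruct HP as [_ [_ [_ [_ [H1 _]]]]]. apply ecR_cr. apply cr_ecR in H1.
    replace (INR 1 * r) with r in * by (simpl; ring).
    replace (INR 2 * r) with (r + r) in * by (simpl; ring).
    intros e He. destruct (H1 e He) as [d [Hd Hy]]. exists (Rmin d r). split. apply Rmin_pos; lra.
    intros y Hy'. assert (Rmin d r <= d) by apply Rmin_l. assert (Rmin d r <= r) by apply Rmin_r.
    destruct (Heq (y + r)) as [_ [F1 _]]. lra. destruct (Heq (0 + r)) as [_ [F2 _]]. lra.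
    rewrite F1, F2. replace (0 + r) with r by ring. apply Hy. lra.
Qed.

End Stat.

Lemma sq_lt_abs a r : 0 < r -> a^2 < r^2 -> Rabs a < r.
Proof. intros. rewrite <- (pow2_abs a) in H0. pose proof (Rabs_pos a). nra. Qed.

Section Gron.
Variables (S X Z F1 F2 F3 : R -> R) (r ss xs L rho : R).
Hypothesis Hr : 0 < r.
Hypothesis HL : 0 < L.
Hypothesis Hrho : 0 < rho.
Hypothesis Hc : forall y, ecC S y /\ ecC X y /\ ecC Z y.
Hypothesis Hd : forall t, 0 < t < r -> is_derive S t (F1 t) /\ is_derive X t (F2 t) /\ is_derive Z t (F3 t).
Hypothesis Hb : forall t, Rabs (S t - ss) < rho -> Rabs (X t - xs) < rho -> Rabs (Z t - xs) < rho ->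
  let D := Rabs (S t - ss) + Rabs (X t - xs) + Rabs (Z t - xs) in
  Rabs (F1 t) <= L * D /\ Rabs (F2 t) <= L * D /\ Rabs (F3 t) <= L * D.

Let V := fun t => (S t - ss)^2 + (X t - xs)^2 + (Z t - xs)^2.
Let W := fun t => V t * exp (- (6 * L * t)).
Let dW := fun t => (2 * (S t - ss) * F1 t + 2 * (X t - xs) * F2 t + 2 * (Z t - xs) * F3 t) * exp (- (6 * L * t))
   + V t * (- (6 * L) * exp (- (6 * L * t))).

Lemma V_ecC y : ecC V y.
Proof. unfold V. destruct (Hc y) as [H1 [H2 H3]].
  apply ecC_plus; [apply ecC_plus|]; apply ecC_sq; apply ecC_minus; auto; apply ecC_const. Qed.

Lemma W_ecC y : ecC W y.
Proof. unfold W. apply ecC_mult. apply V_ecC. apply (ecC_comp exp (fun t => - (6 * L * t))).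
  apply ecC_opp. apply ecC_mult. apply ecC_const. apply ecC_id. apply ecC_exp. Qed.

Lemma W_der t : 0 < t < r -> is_derive W t (dW t).
Proof.
  intros Ht. destruct (Hd t Ht) as [D1 [D2 D3]]. unfold W, dW, V.
  eapply D_eq. apply D_mult. apply D_plus. apply D_plus.
  apply D_sq. apply D_minus. exact D1. apply D_const.
  apply D_sq. apply D_minus. exact D2. apply D_const.
  apply D_sq. apply D_minus. exact D3. apply D_const.
  apply (D_expc (fun t => - (6 * L * t))). apply D_opp. apply (D_mult (fun _ => 6 * L)). apply D_const. apply D_id.
  cbv beta. ring.
Qed.

Lemma dW_neg t : V t < rho^2 -> dW t <= 0.
Proof.
  intros HV. unfold V in HV.
  assert (A1 : Rabs (S t - ss) < rho). { apply sq_lt_abs; auto. pose proof (pow2_ge_0 (X t - xs)). pose proof (pow2_ge_0 (Z t - xs)). lra. }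
  assert (A2 : Rabs (X t - xs) < rho). { apply sq_lt_abs; auto. pose proof (pow2_ge_0 (S t - ss)). pose proof (pow2_ge_0 (Z t - xs)). lra. }
  assert (A3 : Rabs (Z t - xs) < rho). { apply sq_lt_abs; auto. pose proof (pow2_ge_0 (X t - xs)). pose proof (pow2_ge_0 (S t - ss)). lra. }
  destruct (Hb t A1 A2 A3) as [B1 [B2 B3]]. cbv zeta in B1, B2, B3.
  set (a1 := Rabs (S t - ss)) in *. set (a2 := Rabs (X t - xs)) in *. set (a3 := Rabs (Z t - xs)) in *.
  assert (P1 : 0 <= a1) by apply Rabs_pos. assert (P2 : 0 <= a2) by apply Rabs_pos. assert (P3 : 0 <= a3) by apply Rabs_pos.
  assert (Q1 : (S t - ss) * F1 t <= a1 * (L * (a1 + a2 + a3))).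
  { eapply Rle_trans. apply Rle_abs. rewrite Rabs_mult. apply Rmult_le_compat_l; auto. }
  assert (Q2 : (X t - xs) * F2 t <= a2 * (L * (a1 + a2 + a3))).
  { eapply Rle_trans. apply Rle_abs. rewrite Rabs_mult. apply Rmult_le_compat_l; auto. }
  assert (Q3 : (Z t - xs) * F3 t <= a3 * (L * (a1 + a2 + a3))).
  { eapply Rle_trans. apply Rle_abs. rewrite Rabs_mult. apply Rmult_le_compat_l; auto. }
  assert (Vabs : (S t - ss)^2 + (X t - xs)^2 + (Z t - xs)^2 = a1^2 + a2^2 + a3^2).
  { unfold a1, a2, a3. rewrite !pow2_abs. auto. }
  assert (Hsum : 2 * (S t - ss) * F1 t + 2 * (X t - xs) * F2 t + 2 * (Z t - xs) * F3 t
     <= 6 * L * ((S t - ss)^2 + (X t - xs)^2 + (Z t - xs)^2)).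
  { rewrite Vabs. assert (G1 : (a1 + a2 + a3)^2 <= 3 * (a1^2 + a2^2 + a3^2)).
    { pose proof (pow2_ge_0 (a1 - a2)). pose proof (pow2_ge_0 (a2 - a3)). pose proof (pow2_ge_0 (a1 - a3)). nra. }
    assert (G2 : L * (a1 + a2 + a3)^2 <= L * (3 * (a1^2 + a2^2 + a3^2))) by (apply Rmult_le_compat_l; lra).
    assert (G3 : a1 * (L * (a1 + a2 + a3)) + a2 * (L * (a1 + a2 + a3)) + a3 * (L * (a1 + a2 + a3)) = L * (a1 + a2 + a3)^2) by ring.
    lra. }
  unfold dW, V. pose proof (exp_pos (- (6 * L * t))). nra.
Qed.

Lemma W_V t : W t * exp (6 * L * t) = V t.
Proof. unfold W. rewrite Rmult_assoc, <- exp_plus. replace (- (6 * L * t) + 6 * L * t) with 0 by ring.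
  rewrite exp_0. ring. Qed.

Lemma W0 : W 0 = V 0.
Proof. unfold W. replace (- (6 * L * 0)) with 0 by ring. rewrite exp_0. ring. Qed.

Lemma gronwall : V 0 * exp (6 * L * r) < rho^2 -> forall t, 0 <= t <= r -> V t <= V 0 * exp (6 * L * t).
Proof.
  intros H0.
  assert (Hexp : forall t, 0 <= t <= r -> V 0 * exp (6 * L * t) <= V 0 * exp (6 * L * r)).
  { intros t Ht. apply Rmult_le_compat_l. unfold V; pose proof (pow2_ge_0 (S 0 - ss)); pose proof (pow2_ge_0 (X 0 - xs)); pose proof (pow2_ge_0 (Z 0 - xs)); lra.
    destruct (Rle_lt_or_eq_dec _ _ (proj2 Ht)). left. apply exp_increasing. nra. subst; lra. }
  assert (HV0 : V 0 < rho^2). { pose proof (Hexp 0). replace (6 * L * 0) with 0 in H by ring. rewrite exp_0 in H. lra. }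
  set (E := fun t => 0 <= t <= r /\ forall y, 0 <= y <= t -> V y < rho^2).
  destruct (completeness E) as [T [HT1 HT2]].
  { exists r. intros t [Ht _]. lra. }
  { exists 0. split. lra. intros y Hy. replace y with 0 by lra. auto. }
  assert (T0 : 0 <= T). { apply HT1. split. lra. intros y Hy. replace y with 0 by lra. auto. }
  assert (Tr : T <= r). { apply HT2. intros t [Ht _]. lra. }
  assert (C1 : forall y, 0 <= y < T -> V y < rho^2).
  { intros y Hy. destruct (classic (exists t, E t /\ y < t)) as [[t [[Et1 Et2] Hyt]]|Hn].
    - apply Et2. lra.
    - exfalso. assert (T <= y). { apply HT2. intros t Et. destruct (Rle_or_lt t y); auto. exfalso; apply Hn; exists t; auto. }
      lra. }
  assert (C2 : forall y, 0 <= y < T -> W y <= W 0).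
  { intros y Hy. apply (mvt_le W dW 0 y). lra. apply W_ecC.
    intros u Hu. apply W_der. lra. intros u Hu. apply dW_neg. apply C1. lra. }
  assert (C3 : W T <= W 0).
  { destruct (Rle_lt_or_eq_dec _ _ T0) as [Tp|Tz]; [|subst; lra].
    destruct (Rle_or_lt (W T) (W 0)) as [ok|bad]; auto. exfalso.
    destruct (W_ecC T (W T - W 0)) as [d [Hd0 Hdd]]. lra.
    set (y := Rmax 0 (T - d/2)).
    assert (0 <= y) by apply Rmax_l. assert (T - d/2 <= y) by apply Rmax_r.
    assert (y < T). { unfold y. apply Rmax_lub_lt; lra. }
    specialize (C2 y (conj H H2)). specialize (Hdd y). assert (Rabs (y - T) < d) by (apply Rabs_def1; lra).
    specialize (Hdd H3). apply Rabs_def2 in Hdd. lra. }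
  assert (VT : V T < rho^2).
  { rewrite <- W_V. rewrite W0 in C3. pose proof (Hexp T (conj T0 Tr)). pose proof (exp_pos (6 * L * T)). nra. }
  assert (Teq : T = r).
  { destruct (Rle_lt_or_eq_dec _ _ Tr) as [Tl|Te]; auto. exfalso.
    destruct (V_ecC T (rho^2 - V T)) as [d [Hd0 Hdd]]. lra.
    set (t' := Rmin (T + d/2) r).
    assert (t' <= T + d/2) by apply Rmin_l. assert (t' <= r) by apply Rmin_r.
    assert (T < t'). { unfold t'. apply Rmin_glb_lt; lra. }
    assert (E t'). { split. lra. intros y Hy. destruct (Rlt_or_le y T). apply C1; lra.
      assert (Hyd : Rabs (y - T) < d) by (apply Rabs_def1; lra). specialize (Hdd y Hyd). apply Rabs_def2 in Hdd. lra. }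
    specialize (HT1 t' H3). lra. }
  intros t Ht. rewrite <- W_V. rewrite <- W0.
  assert (W t <= W 0). { destruct (Rlt_or_le t T). apply C2; lra. replace t with T by lra. auto. }
  pose proof (exp_pos (6 * L * t)). nra.
Qed.

End Gron.

Lemma der_loc (f : R -> R) s0 l : is_derive f s0 l ->
  exists d C, 0 < d /\ 0 <= C /\ forall s, Rabs (s - s0) < d -> Rabs (f s - f s0) <= C * Rabs (s - s0).
Proof.
  intros H. apply is_derive_Reals in H. destruct (H 1 Rlt_0_1) as [d Hd].
  exists d, (Rabs l + 1). split. apply cond_pos. split. pose proof (Rabs_pos l); lra.
  intros s Hs. destruct (Req_dec s s0) as [E|E].
  - subst. unfold Rminus. rewrite !Rplus_opp_r, Rabs_R0. lra.
  - specialize (Hd (s - s0)). replace (s0 + (s - s0)) with s in Hd by ring.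
    assert (Hn : s - s0 <> 0) by lra. specialize (Hd Hn Hs).
    assert (Hp : 0 < Rabs (s - s0)) by (apply Rabs_pos_lt; auto).
    replace (f s - f s0) with (((f s - f s0) / (s - s0) - l) * (s - s0) + l * (s - s0)) by (field; auto).
    eapply Rle_trans. apply Rabs_triang. rewrite !Rabs_mult.
    pose proof (Rabs_pos l). nra.
Qed.

Lemma tri4 (u1 u2 u3 u4 : R) : Rabs (u1 + u2 + u3 + u4) <= Rabs u1 + Rabs u2 + Rabs u3 + Rabs u4.
Proof. eapply Rle_trans. apply Rabs_triang. eapply Rle_trans. apply Rplus_le_compat_r. eapply Rle_trans.
  apply Rabs_triang. apply Rplus_le_compat_r. apply Rabs_triang. lra. Qed.

Lemma loc_bound (mu g : R -> R) (b sin : R) (k : R -> R -> R) (ss xs Ds : R) lm lg :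
  is_derive mu ss lm -> is_derive g ss lg -> loc_lipschitz2 sin k ->
  0 < ss < sin -> 0 < xs -> 0 < Ds -> 0 <= g ss ->
  mu ss = Ds + b -> Ds * (sin - ss) = g ss * xs -> Ds = k ss xs ->
  exists rho L, 0 < rho /\ 0 < L /\ forall s x z, in_dom2 sin s x -> 0 < z ->
    Rabs (s - ss) < rho -> Rabs (x - xs) < rho -> Rabs (z - xs) < rho ->
    let D := Rabs (s - ss) + Rabs (x - xs) + Rabs (z - xs) in
    Rabs (k s z * (sin - s) - g s * x) <= L * D /\
    Rabs ((mu s - k s z - b) * x) <= L * D /\
    Rabs ((mu s - k s z - b) * z) <= L * D.
Proof.
  intros Hm Hg Hk Hss Hxs HDs Hgss E1 E2 E3.
  destruct (der_loc mu ss lm Hm) as [dm [Cm [Hdm [HCm Hmb]]]].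
  destruct (der_loc g ss lg Hg) as [dg [Cg [Hdg [HCg Hgb]]]].
  destruct (Hk ss xs) as [rk [Lk [Hrk [HLk HLip]]]]. split; auto.
  set (rho := Rmin dm (Rmin dg (Rmin (rk/2) 1))).
  assert (R1 : rho <= dm) by apply Rmin_l.
  assert (R2 : rho <= dg) by (eapply Rle_trans; [apply Rmin_r| apply Rmin_l]).
  assert (R3 : rho <= rk/2) by (eapply Rle_trans; [apply Rmin_r| eapply Rle_trans; [apply Rmin_r|apply Rmin_l]]).
  assert (R4 : rho <= 1) by (eapply Rle_trans; [apply Rmin_r| eapply Rle_trans; [apply Rmin_r|apply Rmin_r]]).
  assert (Rp : 0 < rho) by (repeat apply Rmin_pos; lra).
  set (L := Lk * sin + Ds + Cg * (xs + 1) + g ss + (Cm + Lk) * (xs + 1) + 1).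
  exists rho, L. split; auto. split. unfold L. assert (0 <= Lk * sin) by (apply Rmult_le_pos; lra).
  assert (0 <= Cg * (xs+1)) by (apply Rmult_le_pos; lra). assert (0 <= (Cm + Lk) * (xs+1)) by (apply Rmult_le_pos; lra). lra.
  intros s x z [[Hs1 Hs2] Hx] Hz A1 A2 A3 D.
  set (a1 := Rabs (s - ss)) in *. set (a2 := Rabs (x - xs)) in *. set (a3 := Rabs (z - xs)) in *.
  assert (P1 : 0 <= a1) by apply Rabs_pos. assert (P2 : 0 <= a2) by apply Rabs_pos. assert (P3 : 0 <= a3) by apply Rabs_pos.
  assert (Hkb : Rabs (k s z - Ds) <= Lk * (a1 + a3)).
  { rewrite E3.
    assert (Dd1 : dist2 s z ss xs < rk). { eapply Rle_lt_trans. apply dist2_le. fold a1 a3. lra. }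
    assert (Dd2 : dist2 ss xs ss xs < rk). { eapply Rle_lt_trans. apply dist2_le. unfold Rminus; rewrite !Rplus_opp_r, Rabs_R0. lra. }
    assert (HH := HLip s z ss xs (conj (conj Hs1 Hs2) Hz) (conj Hss Hxs) Dd1 Dd2).
    eapply Rle_trans. exact HH. apply Rmult_le_compat_l; auto. apply dist2_le. }
  assert (Hmu : Rabs (mu s - mu ss) <= Cm * a1) by (apply Hmb; fold a1; lra).
  assert (Hgg : Rabs (g s - g ss) <= Cg * a1) by (apply Hgb; fold a1; lra).
  assert (Hxb : Rabs x <= xs + 1). { apply Rabs_def2 in A2. rewrite Rabs_right; lra. }
  assert (Hzb : Rabs z <= xs + 1). { apply Rabs_def2 in A3. rewrite Rabs_right; lra. }
  assert (Hsb : Rabs (sin - s) <= sin). { rewrite Rabs_right; lra. }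
  assert (HD1 : a1 <= D) by (unfold D; lra). assert (HD2 : a2 <= D) by (unfold D; lra).
  assert (HD3 : a3 <= D) by (unfold D; lra). assert (HD13 : a1 + a3 <= D) by (unfold D; lra).
  assert (HD0 : 0 <= D) by (unfold D; lra).
  assert (HKm : Rabs (mu s - k s z - b) <= (Cm + Lk) * D).
  { replace (mu s - k s z - b) with ((mu s - mu ss) + - (k s z - Ds)) by lra.
    eapply Rle_trans. apply Rabs_triang. rewrite Rabs_Ropp.
    assert (Cm * a1 <= Cm * D) by (apply Rmult_le_compat_l; lra).
    assert (Lk * (a1 + a3) <= Lk * D) by (apply Rmult_le_compat_l; lra). lra. }
  assert (Lge : (Cm + Lk) * (xs + 1) <= L).
  { unfold L. assert (0 <= Lk * sin) by (apply Rmult_le_pos; lra).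
    assert (0 <= Cg * (xs+1)) by (apply Rmult_le_pos; lra). lra. }
  split; [|split].
  - replace (k s z * (sin - s) - g s * x) with
      ((k s z - Ds) * (sin - s) + - (Ds * (s - ss)) + - ((g s - g ss) * x) + - (g ss * (x - xs))) by nra.
    eapply Rle_trans. apply tri4. rewrite !Rabs_Ropp, !Rabs_mult.
    rewrite (Rabs_right Ds) by lra. rewrite (Rabs_right (g ss)) by lra. fold a1 a2.
    assert (T1 : Rabs (k s z - Ds) * Rabs (sin - s) <= Lk * sin * D).
    { apply Rle_trans with (Lk * (a1 + a3) * sin). apply Rmult_le_compat; auto; apply Rabs_pos.
      assert (Lk * (a1 + a3) <= Lk * D) by (apply Rmult_le_compat_l; lra).
      assert (Lk * (a1 + a3) * sin <= Lk * D * sin) by (apply Rmult_le_compat_r; lra).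
      replace (Lk * sin * D) with (Lk * D * sin) by ring. auto. }
    assert (T2 : Ds * a1 <= Ds * D) by (apply Rmult_le_compat_l; lra).
    assert (T3 : Rabs (g s - g ss) * Rabs x <= Cg * (xs + 1) * D).
    { apply Rle_trans with (Cg * a1 * (xs + 1)). apply Rmult_le_compat; auto; apply Rabs_pos.
      replace (Cg * a1 * (xs + 1)) with (Cg * (xs + 1) * a1) by ring. apply Rmult_le_compat_l; auto.
      apply Rmult_le_pos; lra. }
    assert (T4 : g ss * a2 <= g ss * D) by (apply Rmult_le_compat_l; lra).
    assert (Lx : (Lk * sin + Ds + Cg * (xs + 1) + g ss) * D <= L * D).
    { apply Rmult_le_compat_r; auto. unfold L. assert (0 <= (Cm + Lk) * (xs+1)) by (apply Rmult_le_pos; lra). lra. }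
    lra.
  - rewrite Rabs_mult. apply Rle_trans with ((Cm + Lk) * D * (xs + 1)). apply Rmult_le_compat; auto; apply Rabs_pos.
    replace ((Cm + Lk) * D * (xs + 1)) with ((Cm + Lk) * (xs + 1) * D) by ring. apply Rmult_le_compat_r; auto.
  - rewrite Rabs_mult. apply Rle_trans with ((Cm + Lk) * D * (xs + 1)). apply Rmult_le_compat; auto; apply Rabs_pos.
    replace ((Cm + Lk) * D * (xs + 1)) with ((Cm + Lk) * (xs + 1) * D) by ring. apply Rmult_le_compat_r; auto.
Qed.

Lemma ecR_shift (f : R -> R) a : ecR f 0 -> ecR (fun t => f (t - a)) a.
Proof. intros H e He. destruct (H e He) as [d [Hd Hy]]. exists d. split; auto.
  intros y Hy'. replace (a - a) with 0 by ring. apply Hy. lra. Qed.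

Lemma ecC_shift (f : R -> R) a c : ecC f (c - a) -> ecC (fun t => f (t - a)) c.
Proof. intros H e He. destruct (H e He) as [d [Hd Hy]]. exists d. split; auto.
  intros y Hy'. apply Hy. replace (y - a - (c - a)) with (y - c) by ring. auto. Qed.

Section Exist.
Variables (mu g : R -> R) (b sin : R) (k : R -> R -> R) (r : R).
Hypothesis Hmuc : forall s, 0 < s -> ecC mu s.
Hypothesis Hgc : forall s, 0 < s -> ecC g s.
Hypothesis Hgpos : forall s, 0 < s -> 0 < g s.
Hypothesis Hklip : loc_lipschitz2 sin k.
Hypothesis Hr : 0 < r.
Hypothesis HFC : forward_complete_dyn mu g b sin k.

Definition p1 (p : R * R * R) := fst (fst p).
Definition p2 (p : R * R * R) := snd (fst p).
Definition p3 (p : R * R * R) := snd p.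
Definition q1 (q : (R -> R) * (R -> R) * (R -> R)) := fst (fst q).
Definition q2 (q : (R -> R) * (R -> R) * (R -> R)) := snd (fst q).
Definition q3 (q : (R -> R) * (R -> R) * (R -> R)) := snd q.

Definition domp (p : R * R * R) := in_dom2 sin (p1 p) (p2 p) /\ 0 < p3 p.
Definition goodq (p : R * R * R) q := domp p -> dyn_sol mu g b sin k (q1 q) (q2 q) (q3 q) /\
   q1 q 0 = p1 p /\ q2 q 0 = p2 p /\ q3 q 0 = p3 p.

Lemma ex_goodq p : exists q, goodq p q.
Proof.
  destruct (classic (domp p)) as [Hd|Hn].
  - destruct Hd as [H1 H2]. destruct (HFC (p1 p) (p2 p) (p3 p) H1 H2) as [s [x [z [Hs [E1 [E2 E3]]]]]].
    exists (s, x, z). intros _. unfold q1, q2, q3; simpl. auto.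
  - exists ((fun _ => 0), (fun _ => 0), (fun _ => 0)). intros H; contradiction.
Qed.

Definition Sol p := proj1_sig (constructive_indefinite_description _ (ex_goodq p)).
Lemma Sol_good p : goodq p (Sol p).
Proof. unfold Sol. apply proj2_sig. Qed.

Definition nxt (q : (R -> R) * (R -> R) * (R -> R)) : R * R * R := (q1 q r, q2 q r, q2 q r).

Fixpoint state (p0 : R * R * R) (i : nat) : R * R * R :=
  match i with O => p0 | S j => nxt (Sol (state p0 j)) end.

Lemma state_dom p0 : domp p0 -> forall i, domp (state p0 i).
Proof.
  intros H0 i. induction i as [|i IH]; simpl; auto.
  destruct (Sol_good _ IH) as [[Hd _] _]. destruct (Hd r) as [H1 H2]. lra.
  unfold domp, nxt, p1, p2, p3; simpl. split; auto. apply H1.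
Qed.

Definition idx (t : R) : nat :=
  match Rle_dec 0 t with
  | left H => proj1_sig (constructive_indefinite_description _ (idx_ex r t Hr H))
  | right _ => O end.

Lemma idx_spec t i : INR i * r <= t < INR (S i) * r -> idx t = i.
Proof.
  intros Hi. unfold idx. destruct (Rle_dec 0 t) as [H|H].
  - apply (idx_uniq r t); auto. apply proj2_sig.
  - exfalso. pose proof (pos_INR i). nra.
Qed.

Lemma idx_lo t : 0 <= t -> INR (idx t) * r <= t < INR (S (idx t)) * r.
Proof.
  intros Ht. unfold idx. destruct (Rle_dec 0 t) as [H|H]. apply proj2_sig. contradiction.
Qed.

Variable p0 : R * R * R.
Hypothesis Hp0 : domp p0.

Definition sS t := q1 (Sol (state p0 (idx t))) (t - INR (idx t) * r).
Definition sX t := q2 (Sol (state p0 (idx t))) (t - INR (idx t) * r).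
Definition sZ t := q3 (Sol (state p0 (idx t))) (t - INR (idx t) * r).

Lemma built_hybrid : hybrid_sol mu g b sin k r sS sX sZ.
Proof.
  split.
  - intros t Ht. pose proof (idx_lo t Ht) as Hi.
    destruct (Sol_good _ (state_dom p0 Hp0 (idx t))) as [[Hd _] _].
    unfold sS, sX, sZ. apply Hd. lra.
  - intros i. cbv zeta.
    set (q := Sol (state p0 i)).
    destruct (Sol_good _ (state_dom p0 Hp0 i)) as [[Hd [Hder [C1 [C2 C3]]]] [I1 [I2 I3]]]. fold q in Hd, Hder, C1, C2, C3, I1, I2, I3.
    destruct (Sol_good _ (state_dom p0 Hp0 (S i))) as [_ [J1 [J2 J3]]].
    assert (Hca : INR (S i) * r - INR i * r = r) by (rewrite S_INR; ring).
    assert (Hac : INR i * r < INR (S i) * r) by lra.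
    set (Sf := fun t => q1 q (t - INR i * r)).
    set (Xf := fun t => q2 q (t - INR i * r)).
    set (Zf := fun t => q3 q (t - INR i * r)).
    assert (HP : piece mu g b sin k Sf Xf Zf (INR i * r) (INR (S i) * r)).
    { split; [auto|split; [|split; [|split; [|split; [|split; [|split; [|split]]]]]]].
      - intros t Ht. unfold Sf, Xf, Zf. apply Hd. lra.
      - intros t Ht. destruct (Hder (t - INR i * r)) as [D1 [D2 D3]]. lra.
        unfold Sf, Xf, Zf. split; [|split]; apply D_shift; auto.
      - apply ecR_cr. apply ecR_shift. apply cr_ecR. auto.
      - apply ecR_cr. apply ecR_shift. apply cr_ecR. auto.
      - apply ecR_cr. apply ecR_shift. apply cr_ecR. auto.
      - apply ecL_cl. apply ecC_ecL. apply ecC_shift. rewrite Hca.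
        destruct (Hder r Hr) as [D _]. eapply der_ecC. exact D.
      - apply ecL_cl. apply ecC_ecL. apply ecC_shift. rewrite Hca.
        destruct (Hder r Hr) as [_ [D _]]. eapply der_ecC. exact D.
      - apply ecL_cl. apply ecC_ecL. apply ecC_shift. rewrite Hca.
        destruct (Hder r Hr) as [_ [_ D]]. eapply der_ecC. exact D. }
    destruct (piece_reset mu g b sin k Sf Xf Zf _ _ Hmuc Hgc Hgpos Hklip HP) as [HR _].
    destruct HP as [_ [HPd [HPder [H1 [H2 [H3 [H4 [H5 H6]]]]]]]].
    exists Sf, Xf, Zf.
    assert (Hc : idx (INR (S i) * r) = S i).
    { apply idx_spec. split. lra. rewrite (S_INR (S i)). lra. }
    assert (Hsc : forall f : (R -> R) * (R -> R) * (R -> R) -> R -> R,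
       f (Sol (state p0 (idx (INR (S i) * r)))) (INR (S i) * r - INR (idx (INR (S i) * r)) * r)
       = f (Sol (state p0 (S i))) 0).
    { intros f. rewrite Hc. replace (INR (S i) * r - INR (S i) * r) with 0 by ring. auto. }
    split; [exact HPd|split; [exact HPder|]].
    split; [exact H1|split; [exact H2|split; [exact H3|split; [exact H4|split; [exact H5|split; [exact H6|]]]]]].
    split; [|split; [|split]].
    + intros t Ht. unfold sS, sX, sZ, Sf, Xf, Zf. rewrite (idx_spec t i Ht). fold q. auto.
    + unfold sS. rewrite (Hsc q1). rewrite J1. unfold Sf. rewrite Hca. simpl state. unfold nxt, p1; simpl. fold q. auto.
    + unfold sX. rewrite (Hsc q2). rewrite J2. unfold Xf. rewrite Hca. simpl state. unfold nxt, p2; simpl. fold q. auto.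
    + rewrite HR. unfold sZ. rewrite (Hsc q3). rewrite J3. unfold Xf. rewrite Hca. simpl state. unfold nxt, p3; simpl. fold q. auto.
Qed.

Lemma built_init : sS 0 = p1 p0 /\ sX 0 = p2 p0 /\ sZ 0 = p3 p0.
Proof.
  assert (H0 : idx 0 = O). { apply idx_spec. simpl. lra. }
  destruct (Sol_good _ Hp0) as [_ [I1 [I2 I3]]].
  unfold sS, sX, sZ. rewrite H0. simpl state. replace (0 - INR 0 * r) with 0 by (simpl; ring). auto.
Qed.

End Exist.

Lemma conv_shift (f : R -> R) r l : conv_to (fun t => f (t + r)) l -> conv_to f l.
Proof.
  intros H. unfold conv_to in *.
  apply (filterlim_ext (fun t => f ((t - r) + r))). intros t. f_equal. ring.
  apply (filterlim_comp _ _ _ (fun t => t - r) (fun t => f (t + r)) _ (Rbar_locally p_infty)); auto.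
  intros P [M HM]. exists (M + r). intros y Hy. apply HM. lra.
Qed.

Lemma conv_ev (f1 f2 : R -> R) M l : (forall t, M < t -> f1 t = f2 t) -> conv_to f1 l -> conv_to f2 l.
Proof.
  intros H H1. unfold conv_to in *. eapply filterlim_ext_loc. 2: exact H1.
  exists M. auto.
Qed.

Lemma adm_props f : admissible_rate f ->
  (forall s, 0 < s -> ecC f s) /\ (forall s, 0 < s -> 0 < f s) /\ (forall s, 0 < s -> exists l, is_derive f s l)
  /\ (forall s, 0 <= s -> 0 <= f s).
Proof.
  intros [[df [Hd _]] [Hn [_ [_ Hp]]]]. split; [|split; [|split]]; auto.
  - intros s Hs. eapply der_ecC. apply Hd; auto.
  - intros s Hs. exists (df s). auto.
Qed.

Theorem proposition3p1
  (mu g : R -> R) (b sin : R) (k : R -> R -> R) (ss xs Ds : R)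
  (Hmu : admissible_rate mu) (Hg : admissible_rate g)
  (Hb : 0 <= b) (Hsin : 0 < sin)
  (Hss : 0 < ss < sin) (Hxs : 0 < xs) (HDs : 0 < Ds)
  (Heq1 : mu ss = Ds + b) (Heq2 : Ds * (sin - ss) = g ss * xs)
  (Hkpos : forall s x, in_dom2 sin s x -> 0 < k s x)
  (Hklip : loc_lipschitz2 sin k)
  (HkDs : Ds = k ss xs)
  (HGAS : GAS_static mu g b sin k ss xs)
  (HFC : forward_complete_dyn mu g b sin k) :
  forall r : R, 0 < r -> GAS_hybrid mu g b sin k r ss xs.
Proof.
  intros r Hr.
  destruct (adm_props mu Hmu) as [Hmuc [_ [Hmud _]]].
  destruct (adm_props g Hg) as [Hgc [Hgpos [Hgd Hgnn]]].
  destruct HGAS as [Hstab [Hex Hconv]].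
  split; [|split].
  -
    intros eps Heps.
    destruct (Hstab (eps / 2)) as [del1 [Hdel1 Hst]]. lra.
    destruct (Hmud ss (proj1 Hss)) as [lm Hlm]. destruct (Hgd ss (proj1 Hss)) as [lg Hlg].
    destruct (loc_bound mu g b sin k ss xs Ds lm lg Hlm Hlg Hklip Hss Hxs HDs (Hgnn ss (Rlt_le _ _ (proj1 Hss)))
      Heq1 Heq2 HkDs) as [rho [L [Hrho [HL Hbd]]]].
    set (m := Rmin rho (Rmin eps del1)).
    assert (M1 : m <= rho) by apply Rmin_l.
    assert (M2 : m <= eps) by (eapply Rle_trans; [apply Rmin_r|apply Rmin_l]).
    assert (M3 : m <= del1) by (eapply Rle_trans; [apply Rmin_r|apply Rmin_r]).
    assert (Mp : 0 < m) by (repeat apply Rmin_pos; lra).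
    exists (m * exp (- (3 * L * r))). split. apply Rmult_lt_0_compat; auto. apply exp_pos.
    intros s x z Hs Hd0 t Ht.
    destruct (hyb_piece mu g b sin k r Hmuc Hgc Hgpos Hklip Hr s x z Hs 0) as [Sf [Xf [Zf [HP [Heq [Esc [Exc [Ezc _]]]]]]]].
    replace (INR 0 * r) with 0 in HP, Heq by (simpl; ring).
    replace (INR 1 * r) with r in HP, Heq, Esc, Exc, Ezc by (simpl; ring).
    apply piece_clamp in HP. cbv zeta in HP. destruct HP as [Cc [Dd [Der Idc]]].
    set (S := fun y => Sf (clamp 0 r y)) in *. set (X := fun y => Xf (clamp 0 r y)) in *.
    set (Z := fun y => Zf (clamp 0 r y)) in *.
    assert (HV : forall t, 0 <= t <= r ->
      (S t - ss) ^ 2 + (X t - xs) ^ 2 + (Z t - xs) ^ 2 <=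
       ((S 0 - ss) ^ 2 + (X 0 - xs) ^ 2 + (Z 0 - xs) ^ 2) * exp (6 * L * t)).
    { apply (gronwall S X Z
        (fun y => k (S y) (Z y) * (sin - S y) - g (S y) * X y)
        (fun y => (mu (S y) - k (S y) (Z y) - b) * X y)
        (fun y => (mu (S y) - k (S y) (Z y) - b) * Z y) r ss xs L rho); auto.
      - intros y A1 A2 A3. destruct (Dd y) as [Hd1 Hd2]. apply Hbd; auto.
      - destruct (Heq 0) as [E1 [E2 E3]]. lra. destruct (Idc 0) as [I1 [I2 I3]]. lra.
        unfold S, X, Z in I1, I2, I3 |- *. rewrite I1, I2, I3, <- E1, <- E2, <- E3.
        unfold dist3 in Hd0. apply lt_of_sqrt in Hd0.
        2: { pose proof (pow2_ge_0 (s 0 - ss)). pose proof (pow2_ge_0 (x 0 - xs)). pose proof (pow2_ge_0 (z 0 - xs)). lra. }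
        assert (Hex2 : (m * exp (- (3 * L * r))) ^ 2 * exp (6 * L * r) = m ^ 2).
        { replace ((m * exp (- (3 * L * r))) ^ 2 * exp (6 * L * r)) with
            (m ^ 2 * (exp (- (3 * L * r)) * exp (- (3 * L * r)) * exp (6 * L * r))) by ring.
          rewrite <- !exp_plus. replace (- (3 * L * r) + - (3 * L * r) + 6 * L * r) with 0 by ring.
          rewrite exp_0. ring. }
        pose proof (exp_pos (6 * L * r)).
        assert (m ^ 2 <= rho ^ 2) by (apply pow_incr; lra). nra. }
    assert (HV0 : (S 0 - ss) ^ 2 + (X 0 - xs) ^ 2 + (Z 0 - xs) ^ 2 < (m * exp (- (3 * L * r))) ^ 2).
    { destruct (Heq 0) as [E1 [E2 E3]]. lra. destruct (Idc 0) as [I1 [I2 I3]]. lra.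
      unfold S, X, Z in I1, I2, I3 |- *. rewrite I1, I2, I3, <- E1, <- E2, <- E3.
      unfold dist3 in Hd0. apply lt_of_sqrt in Hd0; auto.
      pose proof (pow2_ge_0 (s 0 - ss)). pose proof (pow2_ge_0 (x 0 - xs)). pose proof (pow2_ge_0 (z 0 - xs)). lra. }
    assert (Hex2 : (m * exp (- (3 * L * r))) ^ 2 * exp (6 * L * r) = m ^ 2).
    { replace ((m * exp (- (3 * L * r))) ^ 2 * exp (6 * L * r)) with
        (m ^ 2 * (exp (- (3 * L * r)) * exp (- (3 * L * r)) * exp (6 * L * r))) by ring.
      rewrite <- !exp_plus. replace (- (3 * L * r) + - (3 * L * r) + 6 * L * r) with 0 by ring.
      rewrite exp_0. ring. }
    assert (HVm : forall t, 0 <= t <= r -> (S t - ss) ^ 2 + (X t - xs) ^ 2 + (Z t - xs) ^ 2 < m ^ 2).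
    { intros u Hu. eapply Rle_lt_trans. apply HV; auto.
      assert (exp (6 * L * u) <= exp (6 * L * r)).
      { destruct (Rle_lt_or_eq_dec _ _ (proj2 Hu)). left. apply exp_increasing. nra. subst; lra. }
      pose proof (exp_pos (6 * L * u)).
      assert (0 <= (S 0 - ss) ^ 2 + (X 0 - xs) ^ 2 + (Z 0 - xs) ^ 2).
      { pose proof (pow2_ge_0 (S 0 - ss)). pose proof (pow2_ge_0 (X 0 - xs)). pose proof (pow2_ge_0 (Z 0 - xs)). lra. }
      pose proof (exp_pos (6 * L * r)). nra. }
    destruct (Rlt_or_le t r) as [Htr|Htr].
    + assert (Ht1 : 0 <= t < r) by lra. assert (Ht2 : 0 <= t <= r) by lra.
      destruct (Heq t Ht1) as [E1 [E2 E3]]. destruct (Idc t Ht2) as [I1 [I2 I3]].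
      unfold dist3. rewrite E1, E2, E3, <- I1, <- I2, <- I3.
      apply sqrt_lt_of; [apply Rplus_le_le_0_compat; [apply Rplus_le_le_0_compat|]; apply pow2_ge_0 | lra | ].
      eapply Rlt_le_trans; [apply (HVm t Ht2) | apply pow_incr; lra].
    + pose proof (hyb_static mu g b sin k r Hmuc Hgc Hgpos Hklip Hr s x z Hs) as HSt.
      assert (Hi : dist2 (s (0 + r)) (x (0 + r)) ss xs < del1).
      { replace (0 + r) with r by ring. rewrite Esc, Exc. assert (Hr2 : 0 <= r <= r) by lra.
        destruct (Idc r Hr2) as [I1 [I2 I3]].
        rewrite <- I1, <- I2. unfold dist2.
        apply sqrt_lt_of; [apply Rplus_le_le_0_compat; apply pow2_ge_0 | lra | ].
        pose proof (HVm r Hr2) as HH. pose proof (pow2_ge_0 (Zf (clamp 0 r r) - xs)).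
        assert (m^2 <= del1^2) by (apply pow_incr; lra).
        unfold S, X, Z in HH. lra. }
      specialize (Hst _ _ HSt Hi (t - r)). cbv beta in Hst.
      replace (t - r + r) with t in Hst by ring. assert (Hd2 := Hst ltac:(lra)).
      unfold dist3. rewrite (hyb_zx mu g b sin k r Hmuc Hgc Hgpos Hklip Hr s x z Hs t Htr).
      unfold dist2 in Hd2. apply lt_of_sqrt in Hd2.
      2: { pose proof (pow2_ge_0 (s t - ss)). pose proof (pow2_ge_0 (x t - xs)). lra. }
      apply sqrt_lt_of. pose proof (pow2_ge_0 (s t - ss)). pose proof (pow2_ge_0 (x t - xs)). lra. lra.
      pose proof (pow2_ge_0 (s t - ss)). pose proof (pow2_ge_0 (x t - xs)). nra.
  -
    intros s0 x0 z0 Hd Hz.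
    assert (Hp : domp sin (s0, x0, z0)). { split; auto. }
    exists (sS mu g b sin k r Hr HFC (s0, x0, z0)), (sX mu g b sin k r Hr HFC (s0, x0, z0)),
      (sZ mu g b sin k r Hr HFC (s0, x0, z0)).
    split. apply built_hybrid; auto. apply built_init; auto.
  -
    intros s x z Hs.
    pose proof (hyb_static mu g b sin k r Hmuc Hgc Hgpos Hklip Hr s x z Hs) as HSt.
    destruct (Hconv _ _ HSt) as [C1 C2].
    split; [|split].
    + apply (conv_shift s r). auto.
    + apply (conv_shift x r). auto.
    + apply (conv_ev x z r). intros t Ht. symmetry. apply (hyb_zx mu g b sin k r Hmuc Hgc Hgpos Hklip Hr s x z Hs). lra.
      apply (conv_shift x r). auto.
Qed.
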